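(* Let $\varepsilon\in\{1,-1\}$, let $\mathbb{M}^2(\varepsilon)$ be $\mathbb{S}^2$ if $\varepsilon=1$ and $\mathbb{H}^2$ if $\varepsilon=-1$, and let $\psi:S\to\mathbb{M}^2(\varepsilon)\times\mathbb{R}$ be an immersed surface with constant extrinsic curvature $K>0$, normal $N$ chosen so that $II$ is positive definite. For a local conformal parameter $z$ of $II$, with $I=E\,dz^2+2F|dz|^2+\bar E\,d\bar z^2$, define $Q=E+g(\nu)h_z^2$. Then $$|Q_{\bar z}|^2\le\frac{K\,g'(\nu)^2(1-\nu^2)^2|h_z|^2}{4\chi(\nu)}\,|Q|^2.$$
   Context: $\mathbb{M}^2(\varepsilon)\times\mathbb{R}$ carries the product metric; $h$ is the height function, $\nu=\langle N,\partial_t\rangle$. The real analytic functions $g,\chi$ are $$g(\nu)=\frac{\nu^2-1+\varepsilon K\left(e^{\varepsilon(1-\nu^2)/K}-1\right)}{(1-\nu^2)^2},\qquad \chi(\nu)=\frac{\varepsilon K\left(e^{\varepsilon(1-\nu^2)/K}-1\right)}{1-\nu^2}$$ (extended analytically to $\nu=\pm1$; $\chi>0$ on $[-1,1]$). $Q\,dz^2$ is the $(2,0)$-part, with respect to the conformal structure of $II$, of the quadratic form $A=I+g(\nu)\,dh^2$. *)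

(* Defs.v *)
From Stdlib Require Import Reals List.
From Coquelicot Require Import Coquelicot.
Open Scope R_scope.

(** With s = 1 - nu^2, both are given by the formulas of the paper for s <> 0
    and by their (removable-singularity) analytic values at s = 0, i.e. nu = +-1:
    g(+-1) = eps/(2K), chi(+-1) = 1. *)
Definition gfun (eps K nu : R) : R :=
  let s := 1 - nu ^ 2 in
  if Req_EM_T s 0 then eps / (2 * K)
  else (nu ^ 2 - 1 + eps * K * (exp (eps * s / K) - 1)) / (s ^ 2).

Definition chifun (eps K nu : R) : R :=
  let s := 1 - nu ^ 2 in
  if Req_EM_T s 0 then 1
  else eps * K * (exp (eps * s / K) - 1) / s.

Definition pu (f : R -> R -> R) (u v : R) : R := Derive (fun s => f s v) u.
Definition pv (f : R -> R -> R) (u v : R) : R := Derive (fun s => f u s) v.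

Fixpoint dpart (ds : list bool) (f : R -> R -> R) : R -> R -> R :=
  match ds with
  | List.nil => f
  | List.cons d ds' => if d then pu (dpart ds' f) else pv (dpart ds' f)
  end.

Definition smooth_on (U : R * R -> Prop) (f : R -> R -> R) : Prop :=
  forall (ds : list bool) (u v : R), U (u, v) ->
    ex_derive (fun s => dpart ds f s v) u /\
    ex_derive (fun s => dpart ds f u s) v /\
    continuous (fun p : R * R => dpart ds f (fst p) (snd p)) (u, v).

(** Vectors of R^4 are maps nat -> R (components 0,1,2,3); component 3 is the
    R-factor (coordinate t).  M^2(1) = S^2 in Euclidean R^3, M^2(-1) = H^2 the
    upper sheet of the hyperboloid in Lorentz–Minkowski R^3_1.  The product
    metric of M^2(eps) x R is the restriction of the following form. *)
Definition ip (eps : R) (a b : nat -> R) : R :=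
  a 0%nat * b 0%nat + a 1%nat * b 1%nat + eps * (a 2%nat * b 2%nat) + a 3%nat * b 3%nat.

Definition Du (F : nat -> R -> R -> R) (u v : R) : nat -> R := fun i => pu (F i) u v.
Definition Dv (F : nat -> R -> R -> R) (u v : R) : nat -> R := fun i => pv (F i) u v.
Definition Duu (F : nat -> R -> R -> R) (u v : R) : nat -> R := fun i => pu (pu (F i)) u v.
Definition Duv (F : nat -> R -> R -> R) (u v : R) : nat -> R := fun i => pv (pu (F i)) u v.
Definition Dvv (F : nat -> R -> R -> R) (u v : R) : nat -> R := fun i => pv (pv (F i)) u v.
Definition pt (F : nat -> R -> R -> R) (u v : R) : nat -> R := fun i => F i u v.

Definition I11 eps psi u v := ip eps (Du psi u v) (Du psi u v).
Definition I12 eps psi u v := ip eps (Du psi u v) (Dv psi u v).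
Definition I22 eps psi u v := ip eps (Dv psi u v) (Dv psi u v).
Definition II11 eps psi (N : nat -> R -> R -> R) u v := ip eps (Duu psi u v) (pt N u v).
Definition II12 eps psi (N : nat -> R -> R -> R) u v := ip eps (Duv psi u v) (pt N u v).
Definition II22 eps psi (N : nat -> R -> R -> R) u v := ip eps (Dvv psi u v) (pt N u v).

Definition cec_chart (eps K : R) (U : R * R -> Prop)
    (psi N : nat -> R -> R -> R) : Prop :=
  open U /\
  (forall i, (i < 4)%nat -> smooth_on U (psi i) /\ smooth_on U (N i)) /\
  forall u v, U (u, v) ->
    psi 0%nat u v ^ 2 + psi 1%nat u v ^ 2 + eps * psi 2%nat u v ^ 2 = eps /\
    (eps = -1 -> 0 < psi 2%nat u v) /\
    0 < I11 eps psi u v * I22 eps psi u v - I12 eps psi u v ^ 2 /\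
    ip eps (pt N u v) (pt N u v) = 1 /\
    N 0%nat u v * psi 0%nat u v + N 1%nat u v * psi 1%nat u v
      + eps * (N 2%nat u v * psi 2%nat u v) = 0 /\
    ip eps (pt N u v) (Du psi u v) = 0 /\
    ip eps (pt N u v) (Dv psi u v) = 0 /\
    0 < II11 eps psi N u v /\
    0 < II11 eps psi N u v * II22 eps psi N u v - II12 eps psi N u v ^ 2 /\
    (II11 eps psi N u v * II22 eps psi N u v - II12 eps psi N u v ^ 2)
      / (I11 eps psi u v * I22 eps psi u v - I12 eps psi u v ^ 2) = K /\
    II11 eps psi N u v = II22 eps psi N u v /\
    II12 eps psi N u v = 0.

Definition hgt (psi : nat -> R -> R -> R) : R -> R -> R := psi 3%nat.
Definition nuf (N : nat -> R -> R -> R) : R -> R -> R := N 3%nat.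

(** E = I(d_z, d_z), with d_z = (d_u - i d_v)/2, so that
    I = E dz^2 + 2F |dz|^2 + conj(E) dzbar^2 *)
Definition Ecoef eps psi u v : C :=
  ((I11 eps psi u v - I22 eps psi u v) / 4, - I12 eps psi u v / 2).

Definition hz psi u v : C := (pu (hgt psi) u v / 2, - pv (hgt psi) u v / 2).

Definition Qf eps K psi N u v : C :=
  Cplus (Ecoef eps psi u v)
        (Cmult (RtoC (gfun eps K (nuf N u v))) (Cmult (hz psi u v) (hz psi u v))).

Definition Qzbar eps K psi N u v : C :=
  let qr := fun a b => fst (Qf eps K psi N a b) in
  let qi := fun a b => snd (Qf eps K psi N a b) in
  ((pu qr u v - pv qi u v) / 2, (pu qi u v + pv qr u v) / 2).

(* Main.v *)
Require Import Defs.
From Stdlib Require Import Reals Lra Lia Psatz List.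
From Coquelicot Require Import Coquelicot.
Open Scope R_scope.

Definition wf (w : R) (c3 : R) (a b : nat -> R) : R :=
  a 0%nat * b 0%nat + a 1%nat * b 1%nat + w * (a 2%nat * b 2%nat) + c3 * (a 3%nat * b 3%nat).

Lemma ip_wf eps a b : ip eps a b = wf eps 1 a b.
Proof. unfold ip, wf; ring. Qed.

Lemma is_derive_eq (f : R -> R) x d1 d2 : is_derive f x d1 -> d1 = d2 -> is_derive f x d2.
Proof. intros H ->; exact H. Qed.

Lemma is_derive_wf w c3 (X Y : nat -> R -> R) x dX dY :
  (forall i, (i < 4)%nat -> is_derive (X i) x (dX i)) ->
  (forall i, (i < 4)%nat -> is_derive (Y i) x (dY i)) ->
  is_derive (fun s => wf w c3 (fun i => X i s) (fun i => Y i s)) x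
    (wf w c3 dX (fun i => Y i x) + wf w c3 (fun i => X i x) dY).
Proof.
  intros HX HY.
  assert (M : forall i, (i < 4)%nat -> is_derive (fun s => X i s * Y i s) x (dX i * Y i x + X i x * dY i)).
  { intros i Hi. apply (is_derive_mult (X i) (Y i)); auto. intros; apply Rmult_comm. }
  unfold wf.
  eapply is_derive_eq.
  { apply (is_derive_plus (V:=R_NormedModule)). apply (is_derive_plus (V:=R_NormedModule)).
    apply (is_derive_plus (V:=R_NormedModule)).
    apply M; lia. apply M; lia. apply is_derive_scal; apply M; lia.
    apply is_derive_scal; apply M; lia. }
  simpl. unfold plus; simpl. ring.
Qed.

Lemma dpart_pu ds f : dpart ds (pu f) = dpart (ds ++ true :: nil) f.
Proof. induction ds as [|d ds IH]; simpl; [reflexivity|]. rewrite IH; reflexivity. Qed.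
Lemma dpart_pv ds f : dpart ds (pv f) = dpart (ds ++ false :: nil) f.
Proof. induction ds as [|d ds IH]; simpl; [reflexivity|]. rewrite IH; reflexivity. Qed.

Lemma smooth_pu U f : smooth_on U f -> smooth_on U (pu f).
Proof. intros H ds u v Hu. rewrite dpart_pu. apply H; auto. Qed.
Lemma smooth_pv U f : smooth_on U f -> smooth_on U (pv f).
Proof. intros H ds u v Hu. rewrite dpart_pv. apply H; auto. Qed.

Lemma sm_du U f u v : smooth_on U f -> U (u, v) -> is_derive (fun s => f s v) u (pu f u v).
Proof. intros H Hu. destruct (H nil u v Hu) as [H1 _]. apply Derive_correct; exact H1. Qed.
Lemma sm_dv U f u v : smooth_on U f -> U (u, v) -> is_derive (fun t => f u t) v (pv f u v).
Proof. intros H Hu. destruct (H nil u v Hu) as [_ [H1 _]]. apply Derive_correct; exact H1. Qed.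

Lemma open_loc2 (U : R * R -> Prop) u v : open U -> U (u, v) -> locally_2d (fun a b => U (a, b)) u v.
Proof.
  intros HU Hu. apply locally_2d_locally.
  generalize (HU (u, v) Hu). apply filter_imp. intros [a b]; simpl; auto.
Qed.

Lemma open_loc_u (U : R * R -> Prop) u v : open U -> U (u, v) -> locally u (fun s => U (s, v)).
Proof. intros HU Hu. apply (locally_2d_1d_const_y (fun a b => U (a,b))). now apply open_loc2. Qed.
Lemma open_loc_v (U : R * R -> Prop) u v : open U -> U (u, v) -> locally v (fun t => U (u, t)).
Proof. intros HU Hu. apply (locally_2d_1d_const_x (fun a b => U (a,b))). now apply open_loc2. Qed.

Lemma sm_schwarz U f u v : open U -> smooth_on U f -> U (u, v) -> pu (pv f) u v = pv (pu f) u v.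
Proof.
  intros HU Hf Hu. unfold pu, pv.
  apply Schwarz.
  - apply locally_2d_impl with (2 := open_loc2 U u v HU Hu).
    apply locally_2d_forall. intros a b Hab.
    destruct (Hf nil a b Hab) as [H1 [H2 _]].
    destruct (Hf (false :: nil) a b Hab) as [H3 _].
    destruct (Hf (true :: nil) a b Hab) as [_ [H4 _]].
    simpl in *. unfold pu, pv in *. auto.
  - destruct (Hf (true :: false :: nil) u v Hu) as [_ [_ H]]. apply continuity_2d_pt_filterlim. exact H.
  - destruct (Hf (false :: true :: nil) u v Hu) as [_ [_ H]]. apply continuity_2d_pt_filterlim. exact H.
Qed.

Lemma loc_const_u (U : R * R -> Prop) (f : R -> R -> R) c u v d : open U ->
  (forall a b, U (a, b) -> f a b = c) -> U (u, v) -> is_derive (fun s => f s v) u d -> d = 0.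
Proof.
  intros HU Hc Hu Hd. rewrite <- (is_derive_unique _ _ _ Hd).
  rewrite (Derive_ext_loc _ (fun _ => c)). apply Derive_const.
  generalize (open_loc_u U u v HU Hu). apply filter_imp. intros s Hs. apply Hc; auto.
Qed.
Lemma loc_const_v (U : R * R -> Prop) (f : R -> R -> R) c u v d : open U ->
  (forall a b, U (a, b) -> f a b = c) -> U (u, v) -> is_derive (fun t => f u t) v d -> d = 0.
Proof.
  intros HU Hc Hu Hd. rewrite <- (is_derive_unique _ _ _ Hd).
  rewrite (Derive_ext_loc _ (fun _ => c)). apply Derive_const.
  generalize (open_loc_v U u v HU Hu). apply filter_imp. intros s Hs. apply Hc; auto.
Qed.
Definition det3 a b c d e f g h i := a*(e*i - f*h) - b*(d*i - f*g) + c*(d*h - e*g).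
Definition det4 (m : nat -> nat -> R) :=
  m 0%nat 0%nat * det3 (m 1%nat 1%nat) (m 1%nat 2%nat) (m 1%nat 3%nat) (m 2%nat 1%nat) (m 2%nat 2%nat) (m 2%nat 3%nat) (m 3%nat 1%nat) (m 3%nat 2%nat) (m 3%nat 3%nat)
 - m 0%nat 1%nat * det3 (m 1%nat 0%nat) (m 1%nat 2%nat) (m 1%nat 3%nat) (m 2%nat 0%nat) (m 2%nat 2%nat) (m 2%nat 3%nat) (m 3%nat 0%nat) (m 3%nat 2%nat) (m 3%nat 3%nat)
 + m 0%nat 2%nat * det3 (m 1%nat 0%nat) (m 1%nat 1%nat) (m 1%nat 3%nat) (m 2%nat 0%nat) (m 2%nat 1%nat) (m 2%nat 3%nat) (m 3%nat 0%nat) (m 3%nat 1%nat) (m 3%nat 3%nat)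
 - m 0%nat 3%nat * det3 (m 1%nat 0%nat) (m 1%nat 1%nat) (m 1%nat 2%nat) (m 2%nat 0%nat) (m 2%nat 1%nat) (m 2%nat 2%nat) (m 3%nat 0%nat) (m 3%nat 1%nat) (m 3%nat 2%nat).
Lemma cb (e : R) (f : nat -> nat -> R) :
  det4 (fun i j => ip e (f i) (f j)) = e * (det4 f) ^ 2.
Proof. unfold det4, det3, ip. ring. Qed.

Lemma cramer (f : nat -> nat -> R) (z : nat -> R) :
  (forall i, (i < 4)%nat -> f i 0%nat * z 0%nat + f i 1%nat * z 1%nat + f i 2%nat * z 2%nat + f i 3%nat * z 3%nat = 0) ->
  det4 f <> 0 -> forall k, (k < 4)%nat -> z k = 0.
Proof.
  intros H Hd k Hk.
  pose proof (H 0%nat ltac:(lia)) as H0. pose proof (H 1%nat ltac:(lia)) as H1.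
  pose proof (H 2%nat ltac:(lia)) as H2. pose proof (H 3%nat ltac:(lia)) as H3.
  apply (Rmult_eq_reg_l (det4 f)); [|exact Hd]. rewrite Rmult_0_r.
  assert (E: forall k, (k < 4)%nat -> k = 0%nat \/ k = 1%nat \/ k = 2%nat \/ k = 3%nat) by (intros; lia).
  set (r := fun i => f i 0%nat * z 0%nat + f i 1%nat * z 1%nat + f i 2%nat * z 2%nat + f i 3%nat * z 3%nat).
  destruct (E k Hk) as [-> | [-> | [-> | ->]]].
  - transitivity (det4 (fun i j => if Nat.eqb j 0 then r i else f i j)).
    { unfold det4, det3, r; simpl; ring. }
    unfold det4, det3; simpl. unfold r. rewrite H0, H1, H2, H3. ring.
  - transitivity (det4 (fun i j => if Nat.eqb j 1 then r i else f i j)).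
    { unfold det4, det3, r; simpl; ring. }
    unfold det4, det3; simpl. unfold r. rewrite H0, H1, H2, H3. ring.
  - transitivity (det4 (fun i j => if Nat.eqb j 2 then r i else f i j)).
    { unfold det4, det3, r; simpl; ring. }
    unfold det4, det3; simpl. unfold r. rewrite H0, H1, H2, H3. ring.
  - transitivity (det4 (fun i j => if Nat.eqb j 3 then r i else f i j)).
    { unfold det4, det3, r; simpl; ring. }
    unfold det4, det3; simpl. unfold r. rewrite H0, H1, H2, H3. ring.
Qed.

Lemma ip_sym e x y : ip e x y = ip e y x.
Proof. unfold ip; ring. Qed.

Definition frm (a b n p : nat -> R) (i : nat) : nat -> R :=
  match i with 0%nat => a | 1%nat => b | 2%nat => n | _ => p end.

Lemma parseval e (a b n p X W : nat -> R) :
  e = 1 \/ e = -1 ->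
  ip e n n = 1 -> ip e n a = 0 -> ip e n b = 0 -> ip e n p = 0 ->
  ip e p a = 0 -> ip e p b = 0 -> ip e p p = e ->
  0 < ip e a a * ip e b b - ip e a b ^ 2 ->
  ip e X W = (ip e b b * ip e X a * ip e W a
               - ip e a b * (ip e X a * ip e W b + ip e X b * ip e W a)
               + ip e a a * ip e X b * ip e W b) / (ip e a a * ip e b b - ip e a b ^ 2)
     + ip e X n * ip e W n + e * (ip e X p * ip e W p).
Proof.
  intros He Hnn Hna Hnb Hnp Hpa Hpb Hpp HD.
  set (D := ip e a a * ip e b b - ip e a b ^ 2) in *.
  set (al := (ip e b b * ip e X a - ip e a b * ip e X b) / D).
  set (be := (- ip e a b * ip e X a + ip e a a * ip e X b) / D).
  set (ga := ip e X n).
  set (de := e * ip e X p).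
  set (Y := fun k => X k - (al * a k + be * b k + ga * n k + de * p k)).
  assert (Hlin : forall Z, ip e Z Y = ip e Z X - (al * ip e Z a + be * ip e Z b + ga * ip e Z n + de * ip e Z p)).
  { intros Z. unfold Y, ip. ring. }
  assert (Hee : e * e = 1) by (destruct He; subst; ring).
  assert (Hg : det4 (fun i j => ip e (frm a b n p i) (frm a b n p j)) = D * e).
  { unfold det4, det3. simpl.
    rewrite (ip_sym e a n), (ip_sym e b n), (ip_sym e a p), (ip_sym e b p), (ip_sym e b a), (ip_sym e p n).
    rewrite Hnn, Hna, Hnb, Hnp, Hpa, Hpb, Hpp. unfold D. ring. }
  assert (Hdet : det4 (frm a b n p) <> 0).
  { intro H0. pose proof (cb e (frm a b n p)) as Hc.
    rewrite Hg, H0 in Hc.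
    assert (D * (e * e) = 0) by (rewrite <- (Rmult_assoc D e e), Hc; ring).
    rewrite Hee in H. lra. }
  assert (Ya : ip e a Y = 0).
  { rewrite Hlin. unfold al, be, ga, de. rewrite (ip_sym e a X), (ip_sym e a n), (ip_sym e a p), Hna, Hpa.
    unfold D in *. field. lra. }
  assert (Yb : ip e b Y = 0).
  { rewrite Hlin. unfold al, be, ga, de. rewrite (ip_sym e b X), (ip_sym e b n), (ip_sym e b p), (ip_sym e b a), Hnb, Hpb.
    unfold D in *. field. lra. }
  assert (Yn : ip e n Y = 0).
  { rewrite Hlin. unfold al, be, ga, de. rewrite (ip_sym e n X), Hnn, Hna, Hnb, Hnp. ring. }
  assert (Yp : ip e p Y = 0).
  { rewrite Hlin. unfold al, be, ga, de. rewrite (ip_sym e p X), (ip_sym e p n), Hnp, Hpa, Hpb, Hpp.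
    transitivity (ip e X p * (1 - e * e)); [ring|]. rewrite Hee; ring. }
  assert (HY : forall k, (k < 4)%nat -> (fun k => match k with 2%nat => e * Y k | _ => Y k end) k = 0).
  { apply (cramer (frm a b n p)); [|exact Hdet].
    intros i Hi.
    assert (E: i = 0%nat \/ i = 1%nat \/ i = 2%nat \/ i = 3%nat) by lia.
    destruct E as [-> | [-> | [-> | ->]]]; simpl.
    - rewrite <- Ya; unfold ip; ring.
    - rewrite <- Yb; unfold ip; ring.
    - rewrite <- Yn; unfold ip; ring.
    - rewrite <- Yp; unfold ip; ring. }
  assert (HX : forall k, (k < 4)%nat -> X k = al * a k + be * b k + ga * n k + de * p k).
  { intros k Hk. pose proof (HY k Hk) as H. simpl in H.
    assert (Y k = 0).
    { destruct k as [|[|[|k]]]; auto.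
      apply (Rmult_eq_reg_l e); [rewrite H; ring| destruct He; subst; lra]. }
    unfold Y in H0. lra. }
  transitivity (al * ip e a W + be * ip e b W + ga * ip e n W + de * ip e p W).
  { unfold ip at 1. rewrite (HX 0%nat), (HX 1%nat), (HX 2%nat), (HX 3%nat) by lia. unfold ip; ring. }
  unfold al, be, ga, de. rewrite (ip_sym e a W), (ip_sym e b W), (ip_sym e n W), (ip_sym e p W).
  unfold D in *. field. lra.
Qed.
Lemma core_alg (e K L I11 I12 I22 hu hv nu g gp a1 a2 b1 b2 c1 c2 : R) :
  let D := I11*I22 - I12^2 in
  D <> 0 -> L <> 0 -> K = L^2 / D ->
  c1 = - e*nu*hu*D/L - a1 -> c2 = - e*nu*hv*D/L - a2 ->
  let A3 := (I22*a1*hu - I12*(a1*hv+a2*hu) + I11*a2*hv)/D + L*nu in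
  let B3 := (I22*b1*hu - I12*(b1*hv+b2*hu) + I11*b2*hv)/D in
  let C3 := (I22*c1*hu - I12*(c1*hv+c2*hu) + I11*c2*hv)/D + L*nu in
  let m3 := - L*(I22*hu - I12*hv)/D in
  let k3 := - L*(I11*hv - I12*hu)/D in
  let dQru := (2*a1 - 2*b2)/4 + gp*m3*(hu^2-hv^2)/4 + g*(2*hu*A3 - 2*hv*B3)/4 in
  let dQrv := (2*b1 - 2*c2)/4 + gp*k3*(hu^2-hv^2)/4 + g*(2*hu*B3 - 2*hv*C3)/4 in
  let dQiu := -(a2+b1)/2 - gp*m3*hu*hv/2 - g*(A3*hv + hu*B3)/2 in
  let dQiv := -(b2+c1)/2 - gp*k3*hu*hv/2 - g*(B3*hv + hu*C3)/2 in
  let X := hu/2 in let Y := -hv/2 in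
  let qr := (I11-I22)/4 + g*(hu^2-hv^2)/4 in
  let qi := -I12/2 - g*hu*hv/2 in
  let Im := 2*X*Y*qr - qi*(X^2-Y^2) in
  let s := 1 - nu^2 in
  let Br := -e*nu/K + 2*g*nu - e*g*nu*s/K - gp*s/2 - (gp/(2*D) + e*g*nu/(K*D))*((I22*hu^2 - 2*I12*hu*hv + I11*hv^2) - D*s) in
  (dQru - dQiv)/2 = -2*gp*K*Y*Im/L + hu*L/4*Br /\
  (dQiu + dQrv)/2 = 2*gp*K*X*Im/L - hv*L/4*Br.
Proof.
  intros D HD HL HK C1 C2 A3 B3 C3 m3 k3 dQru dQrv dQiu dQiv X Y qr qi Im s Br.
  subst c1 c2 K. subst Br Im qr qi X Y s dQru dQrv dQiu dQiv A3 B3 C3 m3 k3 D.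
  split; (field; auto).
Qed.
Lemma final_ineq (K L I11 I12 I22 hu hv g gp chi s re im : R) :
  let D := I11*I22 - I12^2 in
  0 < D -> 0 < L -> 0 < K -> L^2 = K*D -> 0 < chi -> chi = 1 + g*s ->
  s*D = I22*hu^2 - 2*I12*hu*hv + I11*hv^2 ->
  let X := hu/2 in let Y := -hv/2 in
  let qr := (I11-I22)/4 + g*(hu^2-hv^2)/4 in
  let qi := -I12/2 - g*hu*hv/2 in
  let Im := 2*X*Y*qr - qi*(X^2-Y^2) in
  re = -2*gp*K*Y*Im/L -> im = 2*gp*K*X*Im/L ->
  re^2 + im^2 <= K * gp^2 * s^2 * (X^2 + Y^2) / (4*chi) * (qr^2 + qi^2).
Proof.
  intros D HD HL HK HLK Hc Hchi Hs X Y qr qi Im Hre Him.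
  set (w := X^2 + Y^2). set (q2 := qr^2 + qi^2).
  set (Q4 := I22*hu^2 - 2*I12*hu*hv + I11*hv^2) in *.
  assert (Hw : 0 <= w) by (unfold w; nra).
  assert (Hq : 0 <= q2) by (unfold q2; nra).
  assert (Hkey : 16*(D + g*Q4)*Im^2 <= Q4^2 * q2).
  { set (P := (I11+I22)/4 + g*w). set (r := qr*(X^2-Y^2) + qi*(2*X*Y)).
    assert (E : Q4^2*q2 - 16*(D + g*Q4)*Im^2 = 64*(P*r - q2*w)^2).
    { unfold P, r, q2, w, Im, qr, qi, X, Y, Q4, D. field. }
    assert (0 <= (P*r - q2*w)^2) by (apply pow2_ge_0). lra. }
  assert (Hk2 : 16*chi*Im^2 <= D*s^2*q2).
  { apply (Rmult_le_reg_l D); auto.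
    replace (D*(16*chi*Im^2)) with (16*(D + g*Q4)*Im^2) by (rewrite Hchi, <- Hs; ring).
    replace (D*(D*s^2*q2)) with (Q4^2*q2) by (rewrite <- Hs; ring). exact Hkey. }
  assert (LHS : re^2 + im^2 = 4*gp^2*K*w*Im^2/D).
  { rewrite Hre, Him. unfold w. field_simplify; [|lra|lra].
    replace (L^2) with (K*D) by auto. field. lra. }
  rewrite LHS.
  assert (Hg : 0 <= gp^2*K*w) by (apply Rmult_le_pos; [apply Rmult_le_pos; nra|lra]).
  assert (E2 : K * gp^2 * s^2 * w / (4*chi) * q2 - 4*gp^2*K*w*Im^2/D
            = gp^2*K*w/(4*chi*D) * (D*s^2*q2 - 16*chi*Im^2)) by (field; lra).
  assert (0 <= gp^2*K*w/(4*chi*D) * (D*s^2*q2 - 16*chi*Im^2)).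
  { apply Rmult_le_pos; [|lra]. unfold Rdiv; apply Rmult_le_pos; [exact Hg| apply Rlt_le, Rinv_0_lt_compat; nra]. }
  fold q2. lra.
Qed.

Definition gform eps K x := (x ^ 2 - 1 + eps * K * (exp (eps * (1 - x ^ 2) / K) - 1)) / ((1 - x ^ 2) ^ 2).

Lemma loc_neq nu : 1 - nu^2 <> 0 -> locally nu (fun x => 1 - x^2 <> 0).
Proof.
  intros H.
  assert (Hc : continuity_pt (fun x => 1 - x^2) nu) by (apply derivable_continuous_pt; reg).
  pose proof (proj1 (continuity_pt_locally _ _) Hc (mkposreal _ (Rabs_pos_lt _ H))) as Hc'. clear Hc. rename Hc' into Hc.
  eapply filter_imp; [|exact Hc]. simpl. intros x Hx Hx0. rewrite Hx0 in Hx.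
  rewrite Rminus_0_l, Rabs_Ropp in Hx. lra.
Qed.

Lemma gfun_loc eps K nu : 1 - nu^2 <> 0 -> locally nu (fun x => gform eps K x = gfun eps K x).
Proof.
  intros H. eapply filter_imp; [|exact (loc_neq nu H)]. intros x Hx.
  unfold gfun, gform. destruct (Req_EM_T (1 - x^2) 0) as [E|E]; [contradiction|reflexivity].
Qed.

Lemma g_ode eps K nu : (eps = 1 \/ eps = -1) -> 0 < K ->
  let s := 1 - nu^2 in let g := gfun eps K nu in let gp := Derive (gfun eps K) nu in
  -eps*nu/K + 2*g*nu - eps*g*nu*s/K - gp*s/2 = 0.
Proof.
  intros He HK s g gp.
  destruct (Req_EM_T s 0) as [Hs|Hs].
  - unfold g, gfun. fold s. destruct (Req_EM_T s 0) as [_|C]; [|contradiction].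
    rewrite Hs. field. lra.
  - assert (Hd : is_derive (gform eps K) nu
      ((2 * nu + eps * K * (exp (eps * (1 - nu ^ 2) / K) * (eps * (- (2 * nu)) / K))) / ((1 - nu^2)^2)
       - (nu ^ 2 - 1 + eps * K * (exp (eps * (1 - nu ^ 2) / K) - 1)) * (2 * (1 - nu^2) * (- (2*nu))) / ((1 - nu^2)^2)^2)).
    { unfold gform. auto_derive.
      - intro C. apply Hs. unfold s. nra.
      - replace (eps * (1 + - (nu * (nu * 1))) * / K) with (eps * (1 - nu ^ 2) / K) by (field; lra).
        unfold s in Hs. field. split; [lra|]. intro C; apply Hs. nra. }
    assert (Hgp : gp = (2 * nu + eps * K * (exp (eps * (1 - nu ^ 2) / K) * (eps * (- (2 * nu)) / K))) / ((1 - nu^2)^2)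
       - (nu ^ 2 - 1 + eps * K * (exp (eps * (1 - nu ^ 2) / K) - 1)) * (2 * (1 - nu^2) * (- (2*nu))) / ((1 - nu^2)^2)^2).
    { unfold gp. rewrite <- (Derive_ext_loc _ _ _ (gfun_loc eps K nu Hs)). apply is_derive_unique. exact Hd. }
    assert (Hg : g = gform eps K nu).
    { unfold g, gfun, gform. fold s. destruct (Req_EM_T s 0); [contradiction|reflexivity]. }
    rewrite Hgp, Hg. unfold gform. unfold s in *.
    set (E := exp (eps * (1 - nu ^ 2) / K)).
    destruct He as [-> | ->]; field; split; auto; lra.
Qed.

Lemma chi_facts eps K nu : (eps = 1 \/ eps = -1) -> 0 < K ->
  chifun eps K nu = 1 + gfun eps K nu * (1 - nu^2) /\ 0 < chifun eps K nu.
Proof.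
  intros He HK. unfold chifun, gfun.
  destruct (Req_EM_T (1 - nu^2) 0) as [Hs|Hs].
  - rewrite Hs. split; lra.
  - split.
    + field; auto.
    + set (s := 1 - nu^2) in *. set (y := eps * s / K).
      assert (Hy : y <> 0).
      { unfold y. intro C. apply Hs. destruct He as [-> | ->].
        - apply (Rmult_eq_compat_r K) in C. field_simplify in C; lra.
        - apply (Rmult_eq_compat_r K) in C. field_simplify in C; lra. }
      assert (Hrw : eps * K * (exp y - 1) / s = (exp y - 1) / y).
      { unfold y. destruct He as [-> | ->]; field; split; lra. }
      rewrite Hrw. pose proof (exp_ineq1 y Hy).
      destruct (Rlt_or_le 0 y) as [Hp|Hn].
      * apply Rdiv_lt_0_compat; lra.
      * assert (y < 0) by lra. pose proof (exp_increasing y 0 H0). rewrite exp_0 in H1.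
        replace ((exp y - 1) / y) with ((1 - exp y) / (- y)) by (field; auto).
        apply Rdiv_lt_0_compat; lra.
Qed.

Lemma exp_bound y : Rabs y <= 1/2 -> 0 <= exp y - 1 - y <= 2 * y^2.
Proof.
  intros Hy. pose proof (Rle_abs y). pose proof (Rle_abs (-y)). rewrite Rabs_Ropp in *. split.
  - pose proof (exp_ineq1_le y). lra.
  - pose proof (exp_ineq1_le (- y)) as H1.
    assert (E : exp y * exp (- y) = 1) by (rewrite <- exp_plus; replace (y + - y) with 0 by ring; apply exp_0).
    assert (Hp : 0 < exp y) by apply exp_pos.
    assert (exp y <= 1 / (1 - y)).
    { apply (Rmult_le_reg_r (1 - y)); [lra|]. field_simplify; [|lra].
      replace (exp y * (1 - y)) with (exp y * (1 - y)) by ring. nra. }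
    assert (1 / (1 - y) - 1 - y <= 2 * y^2).
    { replace (1 / (1 - y) - 1 - y) with (y^2 / (1 - y)) by (field; lra).
      apply (Rmult_le_reg_r (1 - y)); [lra|]. field_simplify; [|lra]. nra. }
    lra.
Qed.

Lemma gfun_bound eps K x : (eps = 1 \/ eps = -1) -> 0 < K -> Rabs (1 - x^2) <= K/2 ->
  Rabs (gfun eps K x) <= 2 / K.
Proof.
  intros He HK Hs. unfold gfun.
  destruct (Req_EM_T (1 - x^2) 0) as [E|E].
  - assert (Rabs eps = 1) by (destruct He as [-> | ->]; [apply Rabs_R1| rewrite Rabs_left; lra]).
    rewrite Rabs_div by lra. rewrite H, (Rabs_right (2*K)) by lra.
    apply (Rmult_le_reg_r (2*K)); [lra|]. field_simplify; lra.
  - set (s := 1 - x^2) in *. set (y := eps * s / K).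
    assert (Hsy : s = eps * K * y) by (unfold y; destruct He as [-> | ->]; field; lra).
    assert (Hyb : Rabs y <= 1/2).
    { unfold y. rewrite Rabs_div, Rabs_mult by lra. rewrite (Rabs_right K) by lra.
      destruct He as [-> | ->]; [rewrite Rabs_R1 | rewrite (Rabs_left (-1)) by lra];
      apply (Rmult_le_reg_r K); auto; field_simplify; lra. }
    assert (Hy0 : y <> 0) by (intro C; apply E; rewrite Hsy, C; ring).
    assert (Eq : (x ^ 2 - 1 + eps * K * (exp y - 1)) / s ^ 2 = eps * (exp y - 1 - y) / (K * y^2)).
    { replace (x^2 - 1) with (- s) by (unfold s; ring). rewrite Hsy.
      destruct He as [-> | ->]; field; split; lra. }
    rewrite Eq.
    destruct (exp_bound y Hyb) as [B1 B2].
    rewrite Rabs_div. rewrite Rabs_mult.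
    assert (Hy2 : 0 < y^2) by (apply pow2_gt_0; auto).
    rewrite (Rabs_right (K * y^2)) by nra. rewrite (Rabs_right (exp y - 1 - y)) by lra.
    assert (Rabs eps = 1) by (destruct He as [-> | ->]; [apply Rabs_R1| rewrite Rabs_left; lra]).
    rewrite H. apply (Rmult_le_reg_r (K * y^2)); [nra|]. field_simplify; nra.
    nra.
Qed.

Lemma gfun_ex_derive eps K nu : 0 < K -> 1 - nu^2 <> 0 -> ex_derive (gfun eps K) nu.
Proof.
  intros HK Hs. apply (ex_derive_ext_loc (gform eps K)); [apply gfun_loc; auto|].
  unfold gform. auto_derive. intro C. apply Hs. nra.
Qed.
Lemma loc_R (P : R -> Prop) u : locally u P -> exists d, 0 < d /\ forall y, Rabs (y - u) < d -> P y.
Proof.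
  intros [e He]. exists e. split; [apply cond_pos|]. intros y Hy. apply He. exact Hy.
Qed.

Lemma deriv_bounded_mult (G H : R -> R) u M :
  locally u (fun s => Rabs (G s) <= M) -> H u = 0 -> is_derive H u 0 ->
  is_derive (fun s => G s * H s) u 0.
Proof.
  intros HG H0 HH. apply is_derive_Reals. apply is_derive_Reals in HH.
  intros e He.
  destruct (loc_R _ _ HG) as [d1 [Hd1 Hb]].
  assert (HM : 0 <= M).
  { pose proof (Hb u ltac:(rewrite Rminus_diag, Rabs_R0; lra)). pose proof (Rabs_pos (G u)). lra. }
  assert (He' : 0 < e / (M + 1)) by (apply Rdiv_lt_0_compat; lra).
  destruct (HH _ He') as [d2 Hd2].
  assert (Hd : 0 < Rmin d1 d2) by (apply Rmin_pos; [lra| apply cond_pos]).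
  exists (mkposreal _ Hd). intros h Hh0 Hh. simpl in Hh.
  assert (h1 : Rabs h < d1) by (eapply Rlt_le_trans; [exact Hh| apply Rmin_l]).
  assert (h2 : Rabs h < d2) by (eapply Rlt_le_trans; [exact Hh| apply Rmin_r]).
  specialize (Hd2 h Hh0 h2). rewrite H0 in *.
  rewrite Rmult_0_r, Rminus_0_r, Rminus_0_r in *.
  replace (G (u + h) * H (u + h) / h) with (G (u + h) * (H (u + h) / h)) by (field; auto).
  rewrite Rabs_mult.
  assert (Hg : Rabs (G (u + h)) <= M) by (apply Hb; replace (u + h - u) with h by ring; exact h1).
  assert (Rabs (G (u + h)) * Rabs (H (u + h) / h) <= M * (e / (M + 1))).
  { apply Rmult_le_compat; auto using Rabs_pos; lra. }
  assert (M * (e / (M + 1)) < e).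
  { apply (Rmult_lt_reg_r (M + 1)); [lra|]. field_simplify; lra. }
  lra.
Qed.


Lemma G_mult eps K (nuS H : R -> R) u nuu dH : (eps = 1 \/ eps = -1) -> 0 < K ->
  is_derive nuS u nuu -> is_derive H u dH -> (1 - nuS u ^ 2 <> 0 \/ (H u = 0 /\ dH = 0)) ->
  is_derive (fun s => gfun eps K (nuS s) * H s) u
    (Derive (gfun eps K) (nuS u) * nuu * H u + gfun eps K (nuS u) * dH).
Proof.
  intros He HK Hn HH Hor.
  destruct (Req_dec (1 - nuS u ^ 2) 0) as [Z|Hs].
  - destruct Hor as [C | [H0 Hd0]]; [contradiction|].
    rewrite H0, Hd0. replace (Derive (gfun eps K) (nuS u) * nuu * 0 + gfun eps K (nuS u) * 0) with 0 by ring.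
    subst dH.
    apply (deriv_bounded_mult _ H u (2 / K)); auto.
    assert (Hex : ex_derive (fun s => 1 - nuS s ^ 2) u) by (auto_derive; exists nuu; exact Hn).
    pose proof (@ex_derive_continuous R_AbsRing R_NormedModule _ u Hex) as Hc.
    assert (Hc' : continuity_pt (fun s => 1 - nuS s ^ 2) u) by (apply continuity_pt_filterlim; exact Hc).
    clear Hc. rename Hc' into Hc.
    assert (HK2 : 0 < K / 2) by lra.
    pose proof (proj1 (continuity_pt_locally _ _) Hc (mkposreal _ HK2)) as Hl.
    eapply filter_imp; [|exact Hl]. simpl. intros x Hx.
    apply gfun_bound; auto.
    replace (1 - nuS x * (nuS x * 1) - (1 - nuS u * (nuS u * 1))) with (1 - nuS x ^ 2) in Hx
      by (simpl in Z; simpl; lra).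
    lra.
  - eapply is_derive_eq.
    + apply (is_derive_mult (fun s => gfun eps K (nuS s)) H); [| exact HH | intros; apply Rmult_comm].
      apply (is_derive_comp (gfun eps K) nuS); [|exact Hn].
      apply Derive_correct. apply gfun_ex_derive; auto.
    + simpl. unfold plus, mult, scal; simpl. unfold mult; simpl. ring.
Qed.

Lemma core_alg2 (e K L I11 I12 I22 hu hv nu g gp a1 a2 b1 b2 c1 c2 A3 B3 C3 m3 k3 : R) :
  let D := I11*I22 - I12^2 in
  D <> 0 -> L <> 0 -> K = L^2 / D ->
  c1 = - e*nu*hu*D/L - a1 -> c2 = - e*nu*hv*D/L - a2 ->
  A3 = (I22*a1*hu - I12*(a1*hv+a2*hu) + I11*a2*hv)/D + L*nu ->
  B3 = (I22*b1*hu - I12*(b1*hv+b2*hu) + I11*b2*hv)/D ->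
  C3 = (I22*c1*hu - I12*(c1*hv+c2*hu) + I11*c2*hv)/D + L*nu ->
  m3 = - L*(I22*hu - I12*hv)/D ->
  k3 = - L*(I11*hv - I12*hu)/D ->
  let s := 1 - nu^2 in
  -e*nu/K + 2*g*nu - e*g*nu*s/K - gp*s/2 = 0 ->
  s * D = I22*hu^2 - 2*I12*hu*hv + I11*hv^2 ->
  let dQru := (2*a1 - 2*b2)/4 + gp*m3*(hu^2-hv^2)/4 + g*(2*hu*A3 - 2*hv*B3)/4 in
  let dQrv := (2*b1 - 2*c2)/4 + gp*k3*(hu^2-hv^2)/4 + g*(2*hu*B3 - 2*hv*C3)/4 in
  let dQiu := -(a2+b1)/2 + (gp*m3*(-(hu*hv)/2) + g*(-(A3*hv + hu*B3)/2)) in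
  let dQiv := -(b2+c1)/2 + (gp*k3*(-(hu*hv)/2) + g*(-(B3*hv + hu*C3)/2)) in
  let X := hu/2 in let Y := -hv/2 in
  let qr := (I11-I22)/4 + g*(hu^2-hv^2)/4 in
  let qi := -I12/2 - g*hu*hv/2 in
  let Im := 2*X*Y*qr - qi*(X^2-Y^2) in
  (dQru - dQiv)/2 = -2*gp*K*Y*Im/L /\
  (dQiu + dQrv)/2 = 2*gp*K*X*Im/L.
Proof.
  intros D HD HL HK Hc1 Hc2 HA3 HB3 HC3 Hm3 Hk3 s Hode Hrt dQru dQrv dQiu dQiv X Y qr qi Im.
  set (Br := -e*nu/K + 2*g*nu - e*g*nu*s/K - gp*s/2 - (gp/(2*D) + e*g*nu/(K*D))*((I22*hu^2 - 2*I12*hu*hv + I11*hv^2) - D*s)).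
  assert (Hbr : Br = 0) by (unfold Br; rewrite Hode, <- Hrt; ring).
  assert (E1 : (dQru - dQiv)/2 = -2*gp*K*Y*Im/L + hu*L/4*Br).
  { unfold Br, dQru, dQiv, Im, qr, qi, X, Y, s. subst c1 c2 K A3 B3 C3 m3 k3. unfold D in *. field. auto. }
  assert (E2 : (dQiu + dQrv)/2 = 2*gp*K*X*Im/L - hv*L/4*Br).
  { unfold Br, dQrv, dQiu, Im, qr, qi, X, Y, s. subst c1 c2 K A3 B3 C3 m3 k3. unfold D in *. field. auto. }
  rewrite Hbr in E1, E2. split; lra.
Qed.

Lemma codazzi_alg (e K L I11 I12 I22 hu hv nu a1 a2 b1 b2 c1 c2 : R) :
  let D := I11*I22 - I12^2 in
  D <> 0 -> L <> 0 -> K = L^2 / D ->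
  2*L*((L*(-I22*c1 + I12*c2)/D + e*(-(I22 - hv^2))*(nu*hu)) - (L*(I12*b1 - I11*b2)/D + e*(-(I12 - hu*hv))*(nu*hv)))
    = K*(2*a1*I22 + I11*(2*b2) - 2*I12*(a2+b1)) ->
  2*L*((L*(I12*a1 - I11*a2)/D + e*(-(I11 - hu^2))*(nu*hv)) - (L*(-I22*b1 + I12*b2)/D + e*(-(I12 - hu*hv))*(nu*hu)))
    = K*(2*b1*I22 + I11*(2*c2) - 2*I12*(b2+c1)) ->
  c1 = - e*nu*hu*D/L - a1 /\ c2 = - e*nu*hv*D/L - a2.
Proof.
  intros D HD HL HK HU HV.
  set (EU := 2*L*((L*(-I22*c1 + I12*c2)/D + e*(-(I22 - hv^2))*(nu*hu)) - (L*(I12*b1 - I11*b2)/D + e*(-(I12 - hu*hv))*(nu*hv)))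
    - K*(2*a1*I22 + I11*(2*b2) - 2*I12*(a2+b1))).
  set (EV := 2*L*((L*(I12*a1 - I11*a2)/D + e*(-(I11 - hu^2))*(nu*hv)) - (L*(-I22*b1 + I12*b2)/D + e*(-(I12 - hu*hv))*(nu*hu)))
    - K*(2*b1*I22 + I11*(2*c2) - 2*I12*(b2+c1))).
  assert (ZU : EU = 0) by (unfold EU; rewrite HU; ring).
  assert (ZV : EV = 0) by (unfold EV; rewrite HV; ring).
  assert (HL2 : -2*L^2 <> 0) by (intro C; apply HL; nra).
  split.
  - assert (Id : (c1 - (- e*nu*hu*D/L - a1))*(-2*L^2) = I11*EU + I12*EV).
    { unfold EU, EV. rewrite HK. unfold D in *. field. auto. }
    rewrite ZU, ZV in Id. assert (c1 - (- e*nu*hu*D/L - a1) = 0).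
    { apply (Rmult_eq_reg_r (-2*L^2)); auto. rewrite Id; ring. }
    lra.
  - assert (Id : (c2 - (- e*nu*hv*D/L - a2))*(-2*L^2) = I12*EU + I22*EV).
    { unfold EU, EV. rewrite HK. unfold D in *. field. auto. }
    rewrite ZU, ZV in Id. assert (c2 - (- e*nu*hv*D/L - a2) = 0).
    { apply (Rmult_eq_reg_r (-2*L^2)); auto. rewrite Id; ring. }
    lra.
Qed.


Lemma d_wf_u w c3 (U : R*R -> Prop) (X Y : nat -> R -> R -> R) u v :
  (forall i, (i < 4)%nat -> smooth_on U (X i) /\ smooth_on U (Y i)) -> U (u, v) ->
  is_derive (fun s => wf w c3 (fun i => X i s v) (fun i => Y i s v)) u
    (wf w c3 (fun i => pu (X i) u v) (fun i => Y i u v) + wf w c3 (fun i => X i u v) (fun i => pu (Y i) u v)).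
Proof.
  intros Hs Hu. exact (is_derive_wf w c3 (fun i s => X i s v) (fun i s => Y i s v) u (fun i => pu (X i) u v) (fun i => pu (Y i) u v)
    (fun i Hi => sm_du U (X i) u v (proj1 (Hs i Hi)) Hu) (fun i Hi => sm_du U (Y i) u v (proj2 (Hs i Hi)) Hu)).
Qed.

Lemma d_wf_v w c3 (U : R*R -> Prop) (X Y : nat -> R -> R -> R) u v :
  (forall i, (i < 4)%nat -> smooth_on U (X i) /\ smooth_on U (Y i)) -> U (u, v) ->
  is_derive (fun t => wf w c3 (fun i => X i u t) (fun i => Y i u t)) v
    (wf w c3 (fun i => pv (X i) u v) (fun i => Y i u v) + wf w c3 (fun i => X i u v) (fun i => pv (Y i) u v)).
Proof.
  intros Hs Hu. exact (is_derive_wf w c3 (fun i t => X i u t) (fun i t => Y i u t) v (fun i => pv (X i) u v) (fun i => pv (Y i) u v)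
    (fun i Hi => sm_dv U (X i) u v (proj1 (Hs i Hi)) Hu) (fun i Hi => sm_dv U (Y i) u v (proj2 (Hs i Hi)) Hu)).
Qed.

Lemma const_wf_u w c3 (U : R*R -> Prop) (X Y : nat -> R -> R -> R) c u v : open U ->
  (forall i, (i < 4)%nat -> smooth_on U (X i) /\ smooth_on U (Y i)) ->
  (forall a b, U (a, b) -> wf w c3 (fun i => X i a b) (fun i => Y i a b) = c) -> U (u, v) ->
  wf w c3 (fun i => pu (X i) u v) (fun i => Y i u v) + wf w c3 (fun i => X i u v) (fun i => pu (Y i) u v) = 0.
Proof.
  intros HU Hs Hc Hu. exact (loc_const_u U (fun a b => wf w c3 (fun i => X i a b) (fun i => Y i a b)) c u v _ HU Hc Hu (d_wf_u w c3 U X Y u v Hs Hu)).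
Qed.

Lemma const_wf_v w c3 (U : R*R -> Prop) (X Y : nat -> R -> R -> R) c u v : open U ->
  (forall i, (i < 4)%nat -> smooth_on U (X i) /\ smooth_on U (Y i)) ->
  (forall a b, U (a, b) -> wf w c3 (fun i => X i a b) (fun i => Y i a b) = c) -> U (u, v) ->
  wf w c3 (fun i => pv (X i) u v) (fun i => Y i u v) + wf w c3 (fun i => X i u v) (fun i => pv (Y i) u v) = 0.
Proof.
  intros HU Hs Hc Hu. exact (loc_const_v U (fun a b => wf w c3 (fun i => X i a b) (fun i => Y i a b)) c u v _ HU Hc Hu (d_wf_v w c3 U X Y u v Hs Hu)).
Qed.

Lemma sm_schwarz2 U f u v : open U -> smooth_on U f -> U (u, v) -> pu (pv (pv f)) u v = pv (pv (pu f)) u v.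
Proof.
  intros HU Hf Hu.
  rewrite (sm_schwarz U (pv f) u v HU (smooth_pv U f Hf) Hu).
  unfold pv at 1. unfold pv at 2.
  apply Derive_ext_loc.
  generalize (open_loc_v U u v HU Hu). apply filter_imp. intros t Ht.
  apply (sm_schwarz U); auto.
Qed.

Lemma wf_ext w c3 (x x' y y' : nat -> R) :
  (forall i, (i < 4)%nat -> x i = x' i) -> (forall i, (i < 4)%nat -> y i = y' i) -> wf w c3 x y = wf w c3 x' y'.
Proof. intros Hx Hy. unfold wf. rewrite (Hx 0%nat), (Hx 1%nat), (Hx 2%nat), (Hx 3%nat), (Hy 0%nat), (Hy 1%nat), (Hy 2%nat), (Hy 3%nat) by lia. reflexivity. Qed.

Lemma wf_sym w c3 x y : wf w c3 x y = wf w c3 y x.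
Proof. unfold wf; ring. Qed.

Lemma d_det (f11 f12 f22 : R -> R) x d11 d12 d22 :
  is_derive f11 x d11 -> is_derive f12 x d12 -> is_derive f22 x d22 ->
  is_derive (fun s => f11 s * f22 s - f12 s ^ 2) x (d11 * f22 x + f11 x * d22 - 2 * f12 x * d12).
Proof.
  intros H1 H2 H3.
  eapply is_derive_eq.
  - apply (is_derive_minus (V:=R_NormedModule)).
    + apply (is_derive_mult f11 f22 x d11 d22 H1 H3). intros; apply Rmult_comm.
    + apply (is_derive_ext (fun s => f12 s * f12 s)); [intros; simpl; ring|].
      apply (is_derive_mult f12 f12 x d12 d12 H2 H2). intros; apply Rmult_comm.
  - simpl. unfold minus, plus, opp, mult; simpl. ring.
Qed.

Lemma d_sqdiff (f g : R -> R) x df dg : is_derive f x df -> is_derive g x dg ->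
  is_derive (fun s => (f s ^ 2 - g s ^ 2) / 4) x ((2 * f x * df - 2 * g x * dg) / 4).
Proof.
  intros Hf Hg.
  apply (is_derive_ext (fun s => /4 * (f s * f s - g s * g s))); [intros; simpl; field|].
  eapply is_derive_eq.
  - apply is_derive_scal. apply (is_derive_minus (V:=R_NormedModule)).
    + apply (is_derive_mult f f x df df Hf Hf). intros; apply Rmult_comm.
    + apply (is_derive_mult g g x dg dg Hg Hg). intros; apply Rmult_comm.
  - simpl. unfold minus, plus, opp, mult; simpl. field.
Qed.

Lemma d_prodh (f g : R -> R) x df dg : is_derive f x df -> is_derive g x dg ->
  is_derive (fun s => - (f s * g s) / 2) x (- (df * g x + f x * dg) / 2).
Proof.
  intros Hf Hg.
  apply (is_derive_ext (fun s => (-/2) * (f s * g s))); [intros; simpl; field|].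
  eapply is_derive_eq.
  - apply is_derive_scal. apply (is_derive_mult f g x df dg Hf Hg). intros; apply Rmult_comm.
  - simpl. unfold plus, mult; simpl. field.
Qed.

Lemma d_lin4 (f g : R -> R) x df dg c : is_derive f x df -> is_derive g x dg ->
  is_derive (fun s => (f s - g s) / c) x ((df - dg) / c).
Proof.
  intros Hf Hg.
  apply (is_derive_ext (fun s => /c * (f s - g s))); [intros; simpl; unfold Rdiv; ring|].
  eapply is_derive_eq.
  - apply is_derive_scal. apply (is_derive_minus (V:=R_NormedModule)); eauto.
  - simpl. unfold minus, plus, opp; simpl. unfold Rdiv; ring.
Qed.

Lemma d_neg2 (f : R -> R) x df : is_derive f x df -> is_derive (fun s => - f s / 2) x (- df / 2).
Proof.
  intros Hf. apply (is_derive_ext (fun s => (-/2) * f s)); [intros; simpl; field|].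
  eapply is_derive_eq; [apply is_derive_scal; exact Hf| match goal with |- ?l = ?r => assert (Z : l = r :> R) by field; exact Z end].
Qed.

Lemma Cmod_sq (z : C) : Cmod z ^ 2 = fst z ^ 2 + snd z ^ 2.
Proof.
  unfold Cmod. assert (0 <= fst z ^ 2) by apply pow2_ge_0. assert (0 <= snd z ^ 2) by apply pow2_ge_0.
  replace (sqrt (fst z ^ 2 + snd z ^ 2) ^ 2) with (sqrt (fst z ^ 2 + snd z ^ 2) * sqrt (fst z ^ 2 + snd z ^ 2)) by ring.
  rewrite sqrt_sqrt; lra.
Qed.


Section Main.
Variables (eps K : R) (U : R * R -> Prop) (psi N : nat -> R -> R -> R).
Hypothesis Heps : eps = 1 \/ eps = -1.
Hypothesis HK : 0 < K.
Hypothesis HU : open U.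
Hypothesis Hsp : forall i, (i < 4)%nat -> smooth_on U (psi i).
Hypothesis HsN : forall i, (i < 4)%nat -> smooth_on U (N i).
Hypothesis Hpt : forall u v, U (u, v) ->
    psi 0%nat u v ^ 2 + psi 1%nat u v ^ 2 + eps * psi 2%nat u v ^ 2 = eps /\
    (eps = -1 -> 0 < psi 2%nat u v) /\
    0 < I11 eps psi u v * I22 eps psi u v - I12 eps psi u v ^ 2 /\
    ip eps (pt N u v) (pt N u v) = 1 /\
    N 0%nat u v * psi 0%nat u v + N 1%nat u v * psi 1%nat u v
      + eps * (N 2%nat u v * psi 2%nat u v) = 0 /\
    ip eps (pt N u v) (Du psi u v) = 0 /\
    ip eps (pt N u v) (Dv psi u v) = 0 /\
    0 < II11 eps psi N u v /\
    0 < II11 eps psi N u v * II22 eps psi N u v - II12 eps psi N u v ^ 2 /\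
    (II11 eps psi N u v * II22 eps psi N u v - II12 eps psi N u v ^ 2)
      / (I11 eps psi u v * I22 eps psi u v - I12 eps psi u v ^ 2) = K /\
    II11 eps psi N u v = II22 eps psi N u v /\
    II12 eps psi N u v = 0.

Lemma spu i : (i < 4)%nat -> smooth_on U (pu (psi i)).
Proof. intros; apply smooth_pu; auto. Qed.
Lemma spv i : (i < 4)%nat -> smooth_on U (pv (psi i)).
Proof. intros; apply smooth_pv; auto. Qed.

Lemma c_nn a b : U (a, b) -> wf eps 1 (fun i => N i a b) (fun i => N i a b) = 1.
Proof. intros H. destruct (Hpt a b H) as [_ [_ [_ [E _]]]]. rewrite ip_wf in E; exact E. Qed.
Lemma c_na a b : U (a, b) -> wf eps 1 (fun i => N i a b) (fun i => pu (psi i) a b) = 0.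
Proof. intros H. destruct (Hpt a b H) as [_ [_ [_ [_ [_ [E _]]]]]]. rewrite ip_wf in E; exact E. Qed.
Lemma c_nb a b : U (a, b) -> wf eps 1 (fun i => N i a b) (fun i => pv (psi i) a b) = 0.
Proof. intros H. destruct (Hpt a b H) as [_ [_ [_ [_ [_ [_ [E _]]]]]]]. rewrite ip_wf in E; exact E. Qed.
Lemma c_np a b : U (a, b) -> wf eps 0 (fun i => N i a b) (fun i => psi i a b) = 0.
Proof. intros H. destruct (Hpt a b H) as [_ [_ [_ [_ [E _]]]]]. rewrite <- E at 2. unfold wf. ring. Qed.
Lemma c_pp a b : U (a, b) -> wf eps 0 (fun i => psi i a b) (fun i => psi i a b) = eps.
Proof. intros H. destruct (Hpt a b H) as [E _]. transitivity (psi 0%nat a b ^ 2 + psi 1%nat a b ^ 2 + eps * psi 2%nat a b ^ 2); [unfold wf; ring | exact E]. Qed.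

Lemma c_pa a b : U (a, b) -> wf eps 0 (fun i => psi i a b) (fun i => pu (psi i) a b) = 0.
Proof.
  intros H. pose proof (const_wf_u eps 0 U psi psi eps a b HU (fun i Hi => conj (Hsp i Hi) (Hsp i Hi)) c_pp H) as E.
  rewrite (wf_sym _ _ (fun i => pu (psi i) a b)) in E. lra.
Qed.
Lemma c_pb a b : U (a, b) -> wf eps 0 (fun i => psi i a b) (fun i => pv (psi i) a b) = 0.
Proof.
  intros H. pose proof (const_wf_v eps 0 U psi psi eps a b HU (fun i Hi => conj (Hsp i Hi) (Hsp i Hi)) c_pp H) as E.
  rewrite (wf_sym _ _ (fun i => pv (psi i) a b)) in E. lra.
Qed.


Lemma sNN i : (i < 4)%nat -> smooth_on U (N i) /\ smooth_on U (N i).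
Proof. intros; split; auto. Qed.
Lemma sNpu i : (i < 4)%nat -> smooth_on U (N i) /\ smooth_on U (pu (psi i)).
Proof. intros; split; [auto| apply spu; auto]. Qed.
Lemma sNpv i : (i < 4)%nat -> smooth_on U (N i) /\ smooth_on U (pv (psi i)).
Proof. intros; split; [auto| apply spv; auto]. Qed.
Lemma sNp i : (i < 4)%nat -> smooth_on U (N i) /\ smooth_on U (psi i).
Proof. intros; split; auto. Qed.
Lemma sppu i : (i < 4)%nat -> smooth_on U (psi i) /\ smooth_on U (pu (psi i)).
Proof. intros; split; [auto| apply spu; auto]. Qed.
Lemma sppv i : (i < 4)%nat -> smooth_on U (psi i) /\ smooth_on U (pv (psi i)).
Proof. intros; split; [auto| apply spv; auto]. Qed.

Definition Xuu i := pu (pu (psi i)).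
Definition Xuv i := pv (pu (psi i)).
Definition Xvv i := pv (pv (psi i)).
Definition Xu i := pu (psi i).
Definition Xv i := pv (psi i).

Lemma sXuu i : (i < 4)%nat -> smooth_on U (Xuu i). Proof. intros; unfold Xuu; apply smooth_pu, spu; auto. Qed.
Lemma sXuv i : (i < 4)%nat -> smooth_on U (Xuv i). Proof. intros; unfold Xuv; apply smooth_pv, spu; auto. Qed.
Lemma sXvv i : (i < 4)%nat -> smooth_on U (Xvv i). Proof. intros; unfold Xvv; apply smooth_pv, spv; auto. Qed.
Lemma sXu i : (i < 4)%nat -> smooth_on U (Xu i). Proof. intros; unfold Xu; apply spu; auto. Qed.
Lemma sXv i : (i < 4)%nat -> smooth_on U (Xv i). Proof. intros; unfold Xv; apply spv; auto. Qed.

Definition W (X Y : nat -> R -> R -> R) a b := wf eps 1 (fun i => X i a b) (fun i => Y i a b).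

Lemma c_II a b : U (a, b) -> W Xuu N a b - W Xvv N a b = 0.
Proof.
  intros H. destruct (Hpt a b H) as [_ [_ [_ [_ [_ [_ [_ [_ [_ [_ [E _]]]]]]]]]]].
  unfold II11, II22 in E. rewrite !ip_wf in E. unfold Duu, Dvv, pt in E. unfold W. unfold Xuu, Xvv. rewrite E. ring.
Qed.
Lemma c_II12 a b : U (a, b) -> W Xuv N a b = 0.
Proof.
  intros H. destruct (Hpt a b H) as [_ [_ [_ [_ [_ [_ [_ [_ [_ [_ [_ E]]]]]]]]]]].
  unfold II12 in E. rewrite !ip_wf in E. unfold Duv, pt in E. exact E.
Qed.
Lemma c_det a b : U (a, b) ->
  W Xuu N a b * W Xvv N a b - W Xuv N a b ^ 2 - K * (W Xu Xu a b * W Xv Xv a b - W Xu Xv a b ^ 2) = 0.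
Proof.
  intros H. destruct (Hpt a b H) as [_ [_ [HD [_ [_ [_ [_ [_ [_ [E _]]]]]]]]]].
  unfold II11, II22, II12, I11, I12, I22 in *. rewrite !ip_wf in E, HD.
  unfold Duu, Duv, Dvv, pt, Du, Dv in *. unfold W, Xuu, Xuv, Xvv, Xu, Xv. rewrite !ip_wf in *. rewrite <- E. field. lra.
Qed.

Lemma dW_u X Y u v : (forall i, (i < 4)%nat -> smooth_on U (X i)) -> (forall i, (i < 4)%nat -> smooth_on U (Y i)) -> U (u, v) ->
  is_derive (fun s => W X Y s v) u (wf eps 1 (fun i => pu (X i) u v) (fun i => Y i u v) + wf eps 1 (fun i => X i u v) (fun i => pu (Y i) u v)).
Proof. intros H1 H2 H3. exact (d_wf_u eps 1 U X Y u v (fun i Hi => conj (H1 i Hi) (H2 i Hi)) H3). Qed.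
Lemma dW_v X Y u v : (forall i, (i < 4)%nat -> smooth_on U (X i)) -> (forall i, (i < 4)%nat -> smooth_on U (Y i)) -> U (u, v) ->
  is_derive (fun t => W X Y u t) v (wf eps 1 (fun i => pv (X i) u v) (fun i => Y i u v) + wf eps 1 (fun i => X i u v) (fun i => pv (Y i) u v)).
Proof. intros H1 H2 H3. exact (d_wf_v eps 1 U X Y u v (fun i Hi => conj (H1 i Hi) (H2 i Hi)) H3). Qed.

Lemma Qf_fst a b : fst (Qf eps K psi N a b) = (W Xu Xu a b - W Xv Xv a b) / 4
   + gfun eps K (N 3%nat a b) * ((pu (psi 3%nat) a b ^ 2 - pv (psi 3%nat) a b ^ 2) / 4).
Proof.
  unfold Qf, Ecoef, hz, Cplus, Cmult, RtoC, I11, I22, nuf, hgt, W, Xu, Xv. simpl.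
  rewrite !ip_wf. unfold Du, Dv. field.
Qed.
Lemma Qf_snd a b : snd (Qf eps K psi N a b) = - W Xu Xv a b / 2
   + gfun eps K (N 3%nat a b) * (- (pu (psi 3%nat) a b * pv (psi 3%nat) a b) / 2).
Proof.
  unfold Qf, Ecoef, hz, Cplus, Cmult, RtoC, I12, nuf, hgt, W, Xu, Xv. simpl.
  rewrite !ip_wf. unfold Du, Dv. field.
Qed.

Section Pt.
Variables u v : R.
Hypothesis Huv : U (u, v).

Lemma f_nm : wf eps 1 (fun i => N i u v) (fun i => pu (N i) u v) = 0.
Proof. pose proof (const_wf_u eps 1 U N N 1 u v HU sNN c_nn Huv). rewrite wf_sym in H. lra. Qed.
Lemma f_nk : wf eps 1 (fun i => N i u v) (fun i => pv (N i) u v) = 0.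
Proof. pose proof (const_wf_v eps 1 U N N 1 u v HU sNN c_nn Huv). rewrite wf_sym in H. lra. Qed.
Lemma f_ma : wf eps 1 (fun i => pu (N i) u v) (fun i => pu (psi i) u v) + wf eps 1 (fun i => N i u v) (fun i => pu (pu (psi i)) u v) = 0.
Proof. exact (const_wf_u eps 1 U N (fun i => pu (psi i)) 0 u v HU sNpu c_na Huv). Qed.
Lemma f_ka : wf eps 1 (fun i => pv (N i) u v) (fun i => pu (psi i) u v) + wf eps 1 (fun i => N i u v) (fun i => pv (pu (psi i)) u v) = 0.
Proof. exact (const_wf_v eps 1 U N (fun i => pu (psi i)) 0 u v HU sNpu c_na Huv). Qed.
Lemma f_mb : wf eps 1 (fun i => pu (N i) u v) (fun i => pv (psi i) u v) + wf eps 1 (fun i => N i u v) (fun i => pv (pu (psi i)) u v) = 0.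
Proof.
  pose proof (const_wf_u eps 1 U N (fun i => pv (psi i)) 0 u v HU sNpv c_nb Huv) as H.
  rewrite <- H. f_equal. apply wf_ext; intros i Hi; auto. symmetry. apply (sm_schwarz U); auto.
Qed.
Lemma f_kb : wf eps 1 (fun i => pv (N i) u v) (fun i => pv (psi i) u v) + wf eps 1 (fun i => N i u v) (fun i => pv (pv (psi i)) u v) = 0.
Proof. exact (const_wf_v eps 1 U N (fun i => pv (psi i)) 0 u v HU sNpv c_nb Huv). Qed.
Lemma f_mp : wf eps 0 (fun i => pu (N i) u v) (fun i => psi i u v) + wf eps 0 (fun i => N i u v) (fun i => pu (psi i) u v) = 0.
Proof. exact (const_wf_u eps 0 U N psi 0 u v HU sNp c_np Huv). Qed.
Lemma f_kp : wf eps 0 (fun i => pv (N i) u v) (fun i => psi i u v) + wf eps 0 (fun i => N i u v) (fun i => pv (psi i) u v) = 0.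
Proof. exact (const_wf_v eps 0 U N psi 0 u v HU sNp c_np Huv). Qed.
Lemma f_aa : wf eps 0 (fun i => pu (psi i) u v) (fun i => pu (psi i) u v) + wf eps 0 (fun i => psi i u v) (fun i => pu (pu (psi i)) u v) = 0.
Proof. exact (const_wf_u eps 0 U psi (fun i => pu (psi i)) 0 u v HU sppu c_pa Huv). Qed.
Lemma f_ba : wf eps 0 (fun i => pv (psi i) u v) (fun i => pu (psi i) u v) + wf eps 0 (fun i => psi i u v) (fun i => pv (pu (psi i)) u v) = 0.
Proof. exact (const_wf_v eps 0 U psi (fun i => pu (psi i)) 0 u v HU sppu c_pa Huv). Qed.
Lemma f_bb : wf eps 0 (fun i => pv (psi i) u v) (fun i => pv (psi i) u v) + wf eps 0 (fun i => psi i u v) (fun i => pv (pv (psi i)) u v) = 0.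
Proof. exact (const_wf_v eps 0 U psi (fun i => pv (psi i)) 0 u v HU sppv c_pb Huv). Qed.


Lemma puXv : forall w c Z, wf w c Z (fun i => pu (pv (psi i)) u v) = wf w c Z (fun i => pv (pu (psi i)) u v).
Proof. intros w c Z. apply wf_ext; auto. intros i Hi. apply (sm_schwarz U); auto. Qed.
Lemma puXv' : forall w c Z, wf w c (fun i => pu (pv (psi i)) u v) Z = wf w c (fun i => pv (pu (psi i)) u v) Z.
Proof. intros w c Z. apply wf_ext; auto. intros i Hi. apply (sm_schwarz U); auto. Qed.

Lemma codU :
  2 * W Xuu N u v * (wf eps 1 (Dvv psi u v) (Du N u v) - wf eps 1 (Duv psi u v) (Dv N u v))
  = K * ((2 * wf eps 1 (Duu psi u v) (Du psi u v)) * W Xv Xv u v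
         + W Xu Xu u v * (2 * wf eps 1 (Duv psi u v) (Dv psi u v))
         - 2 * W Xu Xv u v * (wf eps 1 (Duu psi u v) (Dv psi u v) + wf eps 1 (Du psi u v) (Duv psi u v))).
Proof.
  pose proof (dW_u Xuu N u v sXuu HsN Huv) as d11.
  pose proof (dW_u Xvv N u v sXvv HsN Huv) as d22.
  pose proof (dW_u Xuv N u v sXuv HsN Huv) as d12.
  pose proof (dW_u Xu Xu u v sXu sXu Huv) as e11.
  pose proof (dW_u Xu Xv u v sXu sXv Huv) as e12.
  pose proof (dW_u Xv Xv u v sXv sXv Huv) as e22.
  pose proof (dW_v Xuv N u v sXuv HsN Huv) as f12.
  assert (E1 := loc_const_u U (fun a b => W Xuu N a b - W Xvv N a b) 0 u v _ HU c_II Huv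
                  (is_derive_minus _ _ _ _ _ d11 d22)).
  assert (E2 := loc_const_v U (W Xuv N) 0 u v _ HU c_II12 Huv f12).
  assert (E3 := loc_const_u U (fun a b => W Xuu N a b * W Xvv N a b - W Xuv N a b ^ 2 - K * (W Xu Xu a b * W Xv Xv a b - W Xu Xv a b ^ 2)) 0 u v _ HU c_det Huv
                  (is_derive_minus _ _ _ _ _ (d_det _ _ _ _ _ _ _ d11 d12 d22)
                      (is_derive_scal _ _ K _ (d_det _ _ _ _ _ _ _ e11 e12 e22)))).
  pose proof (c_II u v Huv) as P1. pose proof (c_II12 u v Huv) as P2.
  simpl in E1, E3. unfold minus, plus, opp in E1, E3; simpl in E1, E3.
  assert (S2 : wf eps 1 (fun i => pu (Xvv i) u v) (fun i => N i u v) = wf eps 1 (fun i => pv (Xuv i) u v) (fun i => N i u v)).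
  { apply wf_ext; auto. intros i Hi. unfold Xvv, Xuv. apply (sm_schwarz2 U); auto. }
  rewrite S2 in E1, E3.
  unfold Duu, Duv, Dvv, Du, Dv, pt in *. unfold Xu, Xv, Xuu, Xuv, Xvv in *. unfold W in *.
  rewrite ?puXv, ?puXv' in E3.
  set (Tuu := wf eps 1 (fun i => pu (pu (pu (psi i))) u v) (fun i => N i u v)) in *.
  set (Tvu := wf eps 1 (fun i => pv (pv (pu (psi i))) u v) (fun i => N i u v)) in *.
  set (L := wf eps 1 (fun i => pu (pu (psi i)) u v) (fun i => N i u v)) in *.
  set (L2 := wf eps 1 (fun i => pv (pv (psi i)) u v) (fun i => N i u v)) in *.
  set (M := wf eps 1 (fun i => pv (pu (psi i)) u v) (fun i => N i u v)) in *.
  assert (HL2 : L2 = L) by lra. assert (HM : M = 0) by lra. rewrite HL2, HM in E3.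
  rewrite (wf_sym _ _ (fun i => pu (psi i) u v) (fun i => pu (pu (psi i)) u v)) in E3.
  rewrite (wf_sym _ _ (fun i => pv (psi i) u v) (fun i => pv (pu (psi i)) u v)) in E3.
  assert (HT : Tvu = - wf eps 1 (fun i => pv (pu (psi i)) u v) (fun i => pv (N i) u v)) by lra.
  rewrite HT in E1, E3.
  assert (HTu : Tuu = - wf eps 1 (fun i => pv (pu (psi i)) u v) (fun i => pv (N i) u v) + wf eps 1 (fun i => pv (pv (psi i)) u v) (fun i => pu (N i) u v) - wf eps 1 (fun i => pu (pu (psi i)) u v) (fun i => pu (N i) u v)) by lra.
  rewrite HTu in E3. lra.
Qed.


Lemma codV :
  2 * W Xuu N u v * (wf eps 1 (Duu psi u v) (Dv N u v) - wf eps 1 (Duv psi u v) (Du N u v))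
  = K * ((2 * wf eps 1 (Duv psi u v) (Du psi u v)) * W Xv Xv u v
         + W Xu Xu u v * (2 * wf eps 1 (Dvv psi u v) (Dv psi u v))
         - 2 * W Xu Xv u v * (wf eps 1 (Duv psi u v) (Dv psi u v) + wf eps 1 (Du psi u v) (Dvv psi u v))).
Proof.
  pose proof (dW_v Xuu N u v sXuu HsN Huv) as d11.
  pose proof (dW_v Xvv N u v sXvv HsN Huv) as d22.
  pose proof (dW_v Xuv N u v sXuv HsN Huv) as d12.
  pose proof (dW_v Xu Xu u v sXu sXu Huv) as e11.
  pose proof (dW_v Xu Xv u v sXu sXv Huv) as e12.
  pose proof (dW_v Xv Xv u v sXv sXv Huv) as e22.
  pose proof (dW_u Xuv N u v sXuv HsN Huv) as f12.
  assert (E1 := loc_const_v U (fun a b => W Xuu N a b - W Xvv N a b) 0 u v _ HU c_II Huv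
                  (is_derive_minus _ _ _ _ _ d11 d22)).
  assert (E2 := loc_const_u U (W Xuv N) 0 u v _ HU c_II12 Huv f12).
  assert (E3 := loc_const_v U (fun a b => W Xuu N a b * W Xvv N a b - W Xuv N a b ^ 2 - K * (W Xu Xu a b * W Xv Xv a b - W Xu Xv a b ^ 2)) 0 u v _ HU c_det Huv
                  (is_derive_minus _ _ _ _ _ (d_det _ _ _ _ _ _ _ d11 d12 d22)
                      (is_derive_scal _ _ K _ (d_det _ _ _ _ _ _ _ e11 e12 e22)))).
  pose proof (c_II u v Huv) as P1. pose proof (c_II12 u v Huv) as P2.
  simpl in E1, E3. unfold minus, plus, opp in E1, E3; simpl in E1, E3.
  assert (S2 : wf eps 1 (fun i => pu (Xuv i) u v) (fun i => N i u v) = wf eps 1 (fun i => pv (Xuu i) u v) (fun i => N i u v)).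
  { apply wf_ext; auto. intros i Hi. unfold Xuv, Xuu. apply (sm_schwarz U); auto. apply spu; auto. }
  rewrite S2 in E2.
  unfold Duu, Duv, Dvv, Du, Dv, pt in *. unfold Xu, Xv, Xuu, Xuv, Xvv in *. unfold W in *.
  set (T1 := wf eps 1 (fun i => pv (pu (pu (psi i))) u v) (fun i => N i u v)) in *.
  set (L := wf eps 1 (fun i => pu (pu (psi i)) u v) (fun i => N i u v)) in *.
  set (L2 := wf eps 1 (fun i => pv (pv (psi i)) u v) (fun i => N i u v)) in *.
  set (M := wf eps 1 (fun i => pv (pu (psi i)) u v) (fun i => N i u v)) in *.
  assert (HL2 : L2 = L) by lra. assert (HM : M = 0) by lra. rewrite HL2, HM in E3.
  rewrite (wf_sym _ _ (fun i => pu (psi i) u v) (fun i => pv (pu (psi i)) u v)) in E3.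
  rewrite (wf_sym _ _ (fun i => pv (psi i) u v) (fun i => pv (pv (psi i)) u v)) in E3.
  assert (HT : T1 = - wf eps 1 (fun i => pv (pu (psi i)) u v) (fun i => pu (N i) u v)) by lra.
  rewrite HT in E1, E3.
  set (T3 := wf eps 1 (fun i => pv (pv (pv (psi i))) u v) (fun i => N i u v)) in *.
  assert (HT3 : T3 = - wf eps 1 (fun i => pv (pu (psi i)) u v) (fun i => pu (N i) u v) + wf eps 1 (fun i => pu (pu (psi i)) u v) (fun i => pv (N i) u v) - wf eps 1 (fun i => pv (pv (psi i)) u v) (fun i => pv (N i) u v)) by lra.
  rewrite HT3 in E3. lra.
Qed.


Definition phat : nat -> R := fun i => if Nat.eqb i 3 then 0 else psi i u v.
Definition e3 : nat -> R := fun i => if Nat.eqb i 3 then 1 else 0.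
Definition sI11 := wf eps 1 (Du psi u v) (Du psi u v).
Definition sI12 := wf eps 1 (Du psi u v) (Dv psi u v).
Definition sI22 := wf eps 1 (Dv psi u v) (Dv psi u v).
Definition sD := sI11 * sI22 - sI12 ^ 2.
Definition sL := wf eps 1 (Duu psi u v) (pt N u v).
Definition sa1 := wf eps 1 (Duu psi u v) (Du psi u v).
Definition sa2 := wf eps 1 (Duu psi u v) (Dv psi u v).
Definition sb1 := wf eps 1 (Duv psi u v) (Du psi u v).
Definition sb2 := wf eps 1 (Duv psi u v) (Dv psi u v).
Definition sc1 := wf eps 1 (Dvv psi u v) (Du psi u v).
Definition sc2 := wf eps 1 (Dvv psi u v) (Dv psi u v).
Definition shu := pu (psi 3%nat) u v.
Definition shv := pv (psi 3%nat) u v.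
Definition snu := N 3%nat u v.

Lemma wf_phat x : wf eps 1 x phat = wf eps 0 x (fun i => psi i u v).
Proof. unfold wf, phat. simpl. ring. Qed.
Lemma wf_e3 x : wf eps 1 x e3 = x 3%nat.
Proof. unfold wf, e3. simpl. ring. Qed.
Lemma wf01 x y : wf eps 0 x y = wf eps 1 x y - x 3%nat * y 3%nat.
Proof. unfold wf. ring. Qed.

Lemma pt_facts : 0 < sD /\ 0 < sL /\ K = sL ^ 2 / sD /\
   wf eps 1 (Dvv psi u v) (pt N u v) = sL /\ wf eps 1 (Duv psi u v) (pt N u v) = 0.
Proof.
  destruct (Hpt u v Huv) as [_ [_ [HD [_ [_ [_ [_ [HL [_ [HKr [HII HII12]]]]]]]]]]].
  unfold I11, I12, I22, II11, II22, II12 in *. rewrite !ip_wf in *.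
  unfold sD, sI11, sI12, sI22, sL. split; [exact HD|]. split; [exact HL|].
  split; [| split; [rewrite <- HII; reflexivity | exact HII12]].
  rewrite <- HKr. rewrite <- HII, HII12. field. lra.
Qed.

Lemma pars X Y : wf eps 1 X Y =
  (sI22 * wf eps 1 X (Du psi u v) * wf eps 1 Y (Du psi u v)
   - sI12 * (wf eps 1 X (Du psi u v) * wf eps 1 Y (Dv psi u v) + wf eps 1 X (Dv psi u v) * wf eps 1 Y (Du psi u v))
   + sI11 * wf eps 1 X (Dv psi u v) * wf eps 1 Y (Dv psi u v)) / sD
  + wf eps 1 X (pt N u v) * wf eps 1 Y (pt N u v) + eps * (wf eps 1 X phat * wf eps 1 Y phat).
Proof.
  destruct (Hpt u v Huv) as [_ [_ [HD [Hnn [_ [Hna [Hnb _]]]]]]].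
  assert (Hnp : ip eps (pt N u v) phat = 0).
  { rewrite ip_wf, wf_phat. apply c_np; auto. }
  assert (Hpa : ip eps phat (Du psi u v) = 0).
  { rewrite ip_wf, wf_sym, wf_phat, wf_sym. apply c_pa; auto. }
  assert (Hpb : ip eps phat (Dv psi u v) = 0).
  { rewrite ip_wf, wf_sym, wf_phat, wf_sym. apply c_pb; auto. }
  assert (Hpp : ip eps phat phat = eps).
  { pose proof (c_pp u v Huv) as E. unfold ip, phat; simpl. unfold wf in E. lra. }
  unfold I11, I12, I22 in HD.
  pose proof (parseval eps (Du psi u v) (Dv psi u v) (pt N u v) phat X Y Heps Hnn Hna Hnb Hnp Hpa Hpb Hpp HD) as P.
  rewrite !ip_wf in P. unfold sI11, sI12, sI22, sD. exact P.
Qed.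

Lemma vals :
  wf eps 1 (Du N u v) (Du psi u v) = - sL /\ wf eps 1 (Du N u v) (Dv psi u v) = 0 /\
  wf eps 1 (Du N u v) (pt N u v) = 0 /\
  wf eps 1 (Dv N u v) (Du psi u v) = 0 /\ wf eps 1 (Dv N u v) (Dv psi u v) = - sL /\
  wf eps 1 (Dv N u v) (pt N u v) = 0 /\
  wf eps 1 (Du N u v) phat = snu * shu /\ wf eps 1 (Dv N u v) phat = snu * shv /\
  wf eps 1 (Duu psi u v) phat = - (sI11 - shu ^ 2) /\
  wf eps 1 (Duv psi u v) phat = - (sI12 - shu * shv) /\
  wf eps 1 (Dvv psi u v) phat = - (sI22 - shv ^ 2) /\
  wf eps 1 e3 (Du psi u v) = shu /\ wf eps 1 e3 (Dv psi u v) = shv /\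
  wf eps 1 e3 (pt N u v) = snu /\ wf eps 1 e3 phat = 0 /\ wf eps 1 e3 e3 = 1.
Proof.
  destruct pt_facts as [_ [_ [_ [HC HB]]]].
  pose proof f_ma as Ema. pose proof f_mb as Emb. pose proof f_nm as Enm.
  pose proof f_ka as Eka. pose proof f_kb as Ekb. pose proof f_nk as Enk.
  pose proof f_mp as Emp. pose proof f_kp as Ekp.
  pose proof f_aa as Eaa. pose proof f_ba as Eba. pose proof f_bb as Ebb.
  pose proof (c_na u v Huv) as Cna. pose proof (c_nb u v Huv) as Cnb.
  unfold sL, sI11, sI12, sI22, shu, shv, snu in *.
  unfold Du, Dv, Duu, Duv, Dvv, pt in *.
  rewrite (wf_sym _ _ (fun i => N i u v) (fun i => pu (pu (psi i)) u v)) in Ema.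
  rewrite (wf_sym _ _ (fun i => N i u v) (fun i => pv (pu (psi i)) u v)) in Emb, Eka.
  rewrite (wf_sym _ _ (fun i => N i u v) (fun i => pv (pv (psi i)) u v)) in Ekb.
  rewrite (wf_sym _ _ (fun i => N i u v)) in Enm, Enk.
  repeat split.
  - lra.
  - lra.
  - lra.
  - lra.
  - lra.
  - lra.
  - rewrite wf_phat. rewrite (wf01 (fun i => N i u v) (fun i => pu (psi i) u v)) in Emp. lra.
  - rewrite wf_phat. rewrite (wf01 (fun i => N i u v) (fun i => pv (psi i) u v)) in Ekp. lra.
  - rewrite wf_phat, wf_sym. rewrite (wf01 (fun i => pu (psi i) u v) (fun i => pu (psi i) u v)) in Eaa. simpl in Eaa. lra.
  - rewrite wf_phat, wf_sym. rewrite (wf01 (fun i => pv (psi i) u v) (fun i => pu (psi i) u v)) in Eba.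
    rewrite (wf_sym _ _ (fun i => pv (psi i) u v)) in Eba. simpl in Eba. lra.
  - rewrite wf_phat, wf_sym. rewrite (wf01 (fun i => pv (psi i) u v) (fun i => pv (psi i) u v)) in Ebb. simpl in Ebb. lra.
  - rewrite wf_sym, wf_e3. reflexivity.
  - rewrite wf_sym, wf_e3. reflexivity.
  - rewrite wf_sym, wf_e3. reflexivity.
  - unfold wf, e3, phat; simpl; ring.
  - unfold wf, e3; simpl; ring.
Qed.

Lemma iA3 : pu (pu (psi 3%nat)) u v = (sI22*sa1*shu - sI12*(sa1*shv + sa2*shu) + sI11*sa2*shv)/sD + sL*snu.
Proof.
  destruct vals as [V1 [V2 [V3 [V4 [V5 [V6 [V7 [V8 [V9 [V10 [V11 [V12 [V13 [V14 [V15 V16]]]]]]]]]]]]]]].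
  destruct pt_facts as [HD [HL [_ [HC HB]]]].
  transitivity (wf eps 1 (Duu psi u v) (e3)); [try (rewrite wf_e3); reflexivity|].
  rewrite pars. rewrite ?V1, ?V2, ?V3, ?V4, ?V5, ?V6, ?V7, ?V8, ?V9, ?V10, ?V11, ?V12, ?V13, ?V14, ?V15, ?HC, ?HB.
  fold sL sa1 sa2 sb1 sb2 sc1 sc2. fold sL.
  rewrite ?V1, ?V2, ?V3, ?V4, ?V5, ?V6, ?V7, ?V8, ?V9, ?V10, ?V11, ?V12, ?V13, ?V14, ?V15.
  field. lra.
Qed.

Lemma iB3 : pv (pu (psi 3%nat)) u v = (sI22*sb1*shu - sI12*(sb1*shv + sb2*shu) + sI11*sb2*shv)/sD.
Proof.
  destruct vals as [V1 [V2 [V3 [V4 [V5 [V6 [V7 [V8 [V9 [V10 [V11 [V12 [V13 [V14 [V15 V16]]]]]]]]]]]]]]].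
  destruct pt_facts as [HD [HL [_ [HC HB]]]].
  transitivity (wf eps 1 (Duv psi u v) (e3)); [try (rewrite wf_e3); reflexivity|].
  rewrite pars. rewrite ?V1, ?V2, ?V3, ?V4, ?V5, ?V6, ?V7, ?V8, ?V9, ?V10, ?V11, ?V12, ?V13, ?V14, ?V15, ?HC, ?HB.
  fold sL sa1 sa2 sb1 sb2 sc1 sc2. fold sL.
  rewrite ?V1, ?V2, ?V3, ?V4, ?V5, ?V6, ?V7, ?V8, ?V9, ?V10, ?V11, ?V12, ?V13, ?V14, ?V15.
  field. lra.
Qed.

Lemma iC3 : pv (pv (psi 3%nat)) u v = (sI22*sc1*shu - sI12*(sc1*shv + sc2*shu) + sI11*sc2*shv)/sD + sL*snu.
Proof.
  destruct vals as [V1 [V2 [V3 [V4 [V5 [V6 [V7 [V8 [V9 [V10 [V11 [V12 [V13 [V14 [V15 V16]]]]]]]]]]]]]]].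
  destruct pt_facts as [HD [HL [_ [HC HB]]]].
  transitivity (wf eps 1 (Dvv psi u v) (e3)); [try (rewrite wf_e3); reflexivity|].
  rewrite pars. rewrite ?V1, ?V2, ?V3, ?V4, ?V5, ?V6, ?V7, ?V8, ?V9, ?V10, ?V11, ?V12, ?V13, ?V14, ?V15, ?HC, ?HB.
  fold sL sa1 sa2 sb1 sb2 sc1 sc2. fold sL.
  rewrite ?V1, ?V2, ?V3, ?V4, ?V5, ?V6, ?V7, ?V8, ?V9, ?V10, ?V11, ?V12, ?V13, ?V14, ?V15.
  field. lra.
Qed.

Lemma im3 : pu (N 3%nat) u v = - sL*(sI22*shu - sI12*shv)/sD.
Proof.
  destruct vals as [V1 [V2 [V3 [V4 [V5 [V6 [V7 [V8 [V9 [V10 [V11 [V12 [V13 [V14 [V15 V16]]]]]]]]]]]]]]].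
  destruct pt_facts as [HD [HL [_ [HC HB]]]].
  transitivity (wf eps 1 (Du N u v) (e3)); [try (rewrite wf_e3); reflexivity|].
  rewrite pars. rewrite ?V1, ?V2, ?V3, ?V4, ?V5, ?V6, ?V7, ?V8, ?V9, ?V10, ?V11, ?V12, ?V13, ?V14, ?V15, ?HC, ?HB.
  fold sL sa1 sa2 sb1 sb2 sc1 sc2. fold sL.
  rewrite ?V1, ?V2, ?V3, ?V4, ?V5, ?V6, ?V7, ?V8, ?V9, ?V10, ?V11, ?V12, ?V13, ?V14, ?V15.
  field. lra.
Qed.

Lemma ik3 : pv (N 3%nat) u v = - sL*(sI11*shv - sI12*shu)/sD.
Proof.
  destruct vals as [V1 [V2 [V3 [V4 [V5 [V6 [V7 [V8 [V9 [V10 [V11 [V12 [V13 [V14 [V15 V16]]]]]]]]]]]]]]].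
  destruct pt_facts as [HD [HL [_ [HC HB]]]].
  transitivity (wf eps 1 (Dv N u v) (e3)); [try (rewrite wf_e3); reflexivity|].
  rewrite pars. rewrite ?V1, ?V2, ?V3, ?V4, ?V5, ?V6, ?V7, ?V8, ?V9, ?V10, ?V11, ?V12, ?V13, ?V14, ?V15, ?HC, ?HB.
  fold sL sa1 sa2 sb1 sb2 sc1 sc2. fold sL.
  rewrite ?V1, ?V2, ?V3, ?V4, ?V5, ?V6, ?V7, ?V8, ?V9, ?V10, ?V11, ?V12, ?V13, ?V14, ?V15.
  field. lra.
Qed.

Lemma iCm : wf eps 1 (Dvv psi u v) (Du N u v) = sL*(-sI22*sc1 + sI12*sc2)/sD + eps*(-(sI22 - shv^2))*(snu*shu).
Proof.
  destruct vals as [V1 [V2 [V3 [V4 [V5 [V6 [V7 [V8 [V9 [V10 [V11 [V12 [V13 [V14 [V15 V16]]]]]]]]]]]]]]].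
  destruct pt_facts as [HD [HL [_ [HC HB]]]].
  transitivity (wf eps 1 (Dvv psi u v) (Du N u v)); [try (rewrite wf_e3); reflexivity|].
  rewrite pars. rewrite ?V1, ?V2, ?V3, ?V4, ?V5, ?V6, ?V7, ?V8, ?V9, ?V10, ?V11, ?V12, ?V13, ?V14, ?V15, ?HC, ?HB.
  fold sL sa1 sa2 sb1 sb2 sc1 sc2. fold sL.
  rewrite ?V1, ?V2, ?V3, ?V4, ?V5, ?V6, ?V7, ?V8, ?V9, ?V10, ?V11, ?V12, ?V13, ?V14, ?V15.
  field. lra.
Qed.

Lemma iBk : wf eps 1 (Duv psi u v) (Dv N u v) = sL*(sI12*sb1 - sI11*sb2)/sD + eps*(-(sI12 - shu*shv))*(snu*shv).
Proof.
  destruct vals as [V1 [V2 [V3 [V4 [V5 [V6 [V7 [V8 [V9 [V10 [V11 [V12 [V13 [V14 [V15 V16]]]]]]]]]]]]]]].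
  destruct pt_facts as [HD [HL [_ [HC HB]]]].
  transitivity (wf eps 1 (Duv psi u v) (Dv N u v)); [try (rewrite wf_e3); reflexivity|].
  rewrite pars. rewrite ?V1, ?V2, ?V3, ?V4, ?V5, ?V6, ?V7, ?V8, ?V9, ?V10, ?V11, ?V12, ?V13, ?V14, ?V15, ?HC, ?HB.
  fold sL sa1 sa2 sb1 sb2 sc1 sc2. fold sL.
  rewrite ?V1, ?V2, ?V3, ?V4, ?V5, ?V6, ?V7, ?V8, ?V9, ?V10, ?V11, ?V12, ?V13, ?V14, ?V15.
  field. lra.
Qed.

Lemma iAk : wf eps 1 (Duu psi u v) (Dv N u v) = sL*(sI12*sa1 - sI11*sa2)/sD + eps*(-(sI11 - shu^2))*(snu*shv).
Proof.
  destruct vals as [V1 [V2 [V3 [V4 [V5 [V6 [V7 [V8 [V9 [V10 [V11 [V12 [V13 [V14 [V15 V16]]]]]]]]]]]]]]].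
  destruct pt_facts as [HD [HL [_ [HC HB]]]].
  transitivity (wf eps 1 (Duu psi u v) (Dv N u v)); [try (rewrite wf_e3); reflexivity|].
  rewrite pars. rewrite ?V1, ?V2, ?V3, ?V4, ?V5, ?V6, ?V7, ?V8, ?V9, ?V10, ?V11, ?V12, ?V13, ?V14, ?V15, ?HC, ?HB.
  fold sL sa1 sa2 sb1 sb2 sc1 sc2. fold sL.
  rewrite ?V1, ?V2, ?V3, ?V4, ?V5, ?V6, ?V7, ?V8, ?V9, ?V10, ?V11, ?V12, ?V13, ?V14, ?V15.
  field. lra.
Qed.

Lemma iBm : wf eps 1 (Duv psi u v) (Du N u v) = sL*(-sI22*sb1 + sI12*sb2)/sD + eps*(-(sI12 - shu*shv))*(snu*shu).
Proof.
  destruct vals as [V1 [V2 [V3 [V4 [V5 [V6 [V7 [V8 [V9 [V10 [V11 [V12 [V13 [V14 [V15 V16]]]]]]]]]]]]]]].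
  destruct pt_facts as [HD [HL [_ [HC HB]]]].
  transitivity (wf eps 1 (Duv psi u v) (Du N u v)); [try (rewrite wf_e3); reflexivity|].
  rewrite pars. rewrite ?V1, ?V2, ?V3, ?V4, ?V5, ?V6, ?V7, ?V8, ?V9, ?V10, ?V11, ?V12, ?V13, ?V14, ?V15, ?HC, ?HB.
  fold sL sa1 sa2 sb1 sb2 sc1 sc2. fold sL.
  rewrite ?V1, ?V2, ?V3, ?V4, ?V5, ?V6, ?V7, ?V8, ?V9, ?V10, ?V11, ?V12, ?V13, ?V14, ?V15.
  field. lra.
Qed.

Lemma iRT : (1 - snu^2) * sD = sI22*shu^2 - 2*sI12*shu*shv + sI11*shv^2.
Proof.
  destruct vals as [V1 [V2 [V3 [V4 [V5 [V6 [V7 [V8 [V9 [V10 [V11 [V12 [V13 [V14 [V15 V16]]]]]]]]]]]]]]].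
  destruct pt_facts as [HD [HL _]].
  pose proof (pars e3 e3) as P. rewrite V16, V12, V13, V14, V15 in P.
  assert (E : sI22*shu^2 - 2*sI12*shu*shv + sI11*shv^2 = (sI22 * shu * shu - sI12 * (shu * shv + shv * shu) + sI11 * shv * shv) / sD * sD) by (field; lra).
  rewrite E. replace ((sI22 * shu * shu - sI12 * (shu * shv + shv * shu) + sI11 * shv * shv) / sD) with (1 - snu * snu) by lra.
  ring.
Qed.

Lemma iCod : sc1 = - eps*snu*shu*sD/sL - sa1 /\ sc2 = - eps*snu*shv*sD/sL - sa2.
Proof.
  destruct pt_facts as [HD [HL [HK' _]]].
  assert (CU : 2*sL*((sL*(-sI22*sc1 + sI12*sc2)/sD + eps*(-(sI22 - shv^2))*(snu*shu)) - (sL*(sI12*sb1 - sI11*sb2)/sD + eps*(-(sI12 - shu*shv))*(snu*shv)))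
    = K*(2*sa1*sI22 + sI11*(2*sb2) - 2*sI12*(sa2+sb1))).
  { rewrite <- iCm, <- iBk. pose proof codU as C. unfold W, Xuu, Xu, Xv in C.
    unfold sL, sa1, sa2, sb1, sb2, sI11, sI12, sI22. unfold Duu, Duv, Dvv, Du, Dv, pt in *.
    rewrite (wf_sym _ _ (fun i => pu (psi i) u v) (fun i => pv (pu (psi i)) u v)) in C. lra. }
  assert (CV : 2*sL*((sL*(sI12*sa1 - sI11*sa2)/sD + eps*(-(sI11 - shu^2))*(snu*shv)) - (sL*(-sI22*sb1 + sI12*sb2)/sD + eps*(-(sI12 - shu*shv))*(snu*shu)))
    = K*(2*sb1*sI22 + sI11*(2*sc2) - 2*sI12*(sb2+sc1))).
  { rewrite <- iAk, <- iBm. pose proof codV as C. unfold W, Xuu, Xu, Xv in C.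
    unfold sL, sb1, sb2, sc1, sc2, sI11, sI12, sI22. unfold Duu, Duv, Dvv, Du, Dv, pt in *.
    rewrite (wf_sym _ _ (fun i => pu (psi i) u v) (fun i => pv (pv (psi i)) u v)) in C. lra. }
  apply (codazzi_alg eps K sL sI11 sI12 sI22 shu shv snu sa1 sa2 sb1 sb2 sc1 sc2); fold sD; auto; lra.
Qed.

Hypothesis Hor : 1 - N 3%nat u v ^ 2 <> 0 \/ (pu (psi 3%nat) u v = 0 /\ pv (psi 3%nat) u v = 0).

Lemma dqr_u : Derive (fun s => fst (Qf eps K psi N s v)) u =
  (2 * wf eps 1 (Duu psi u v) (Du psi u v) - 2 * wf eps 1 (Duv psi u v) (Dv psi u v)) / 4
  + (Derive (gfun eps K) (N 3%nat u v) * pu (N 3%nat) u v * ((pu (psi 3%nat) u v ^ 2 - pv (psi 3%nat) u v ^ 2) / 4)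
     + gfun eps K (N 3%nat u v) * ((2 * pu (psi 3%nat) u v * pu (pu (psi 3%nat)) u v - 2 * pv (psi 3%nat) u v * pv (pu (psi 3%nat)) u v) / 4)).
Proof.
  rewrite (Derive_ext _ _ u (fun s => Qf_fst s v)).
  apply is_derive_unique.
  assert (H3 : (3 < 4)%nat) by lia.
  assert (Hdh : is_derive (fun s => (pu (psi 3%nat) s v ^ 2 - pv (psi 3%nat) s v ^ 2) / 4) u
     ((2 * pu (psi 3%nat) u v * pu (pu (psi 3%nat)) u v - 2 * pv (psi 3%nat) u v * pv (pu (psi 3%nat)) u v) / 4)).
  { rewrite <- (sm_schwarz U (psi 3%nat) u v HU (Hsp 3%nat H3) Huv).
    apply (d_sqdiff (fun s => pu (psi 3%nat) s v) (fun s => pv (psi 3%nat) s v)).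
    - exact (sm_du U (pu (psi 3%nat)) u v (spu 3%nat H3) Huv).
    - exact (sm_du U (pv (psi 3%nat)) u v (spv 3%nat H3) Huv). }
  eapply is_derive_eq.
  - apply (is_derive_plus (V:=R_NormedModule)).
    + apply d_lin4; [apply dW_u | apply dW_u]; auto using sXu, sXv.
    + apply (G_mult eps K (fun s => N 3%nat s v) _ u (pu (N 3%nat) u v) _ Heps HK (sm_du U (N 3%nat) u v (HsN 3%nat H3) Huv) Hdh).
      destruct Hor as [Ho | [Ho1 Ho2]]; [left; exact Ho| right]. cbv beta. rewrite Ho1, Ho2. split; [exact (eq_trans (f_equal (fun x => x / 4) (Rminus_diag (0^2))) (Rmult_0_l _)) | match goal with |- ?l = _ => assert (Z : l = 0 :> R) by (unfold Rdiv; ring); exact Z end].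
  - simpl. unfold plus; simpl. unfold Xu, Xv. rewrite puXv, puXv'.
    rewrite (wf_sym _ _ (fun i => pu (psi i) u v) (fun i => pu (pu (psi i)) u v)).
    rewrite (wf_sym _ _ (fun i => pv (psi i) u v) (fun i => pv (pu (psi i)) u v)).
    unfold Duu, Du, Duv, Dv. lra.
Qed.

Lemma dqr_v : Derive (fun t => fst (Qf eps K psi N u t)) v =
  (2 * wf eps 1 (Duv psi u v) (Du psi u v) - 2 * wf eps 1 (Dvv psi u v) (Dv psi u v)) / 4
  + (Derive (gfun eps K) (N 3%nat u v) * pv (N 3%nat) u v * ((pu (psi 3%nat) u v ^ 2 - pv (psi 3%nat) u v ^ 2) / 4)
     + gfun eps K (N 3%nat u v) * ((2 * pu (psi 3%nat) u v * pv (pu (psi 3%nat)) u v - 2 * pv (psi 3%nat) u v * pv (pv (psi 3%nat)) u v) / 4)).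
Proof.
  rewrite (Derive_ext _ _ v (fun t => Qf_fst u t)).
  apply is_derive_unique.
  assert (H3 : (3 < 4)%nat) by lia.
  assert (Hdh : is_derive (fun t => (pu (psi 3%nat) u t ^ 2 - pv (psi 3%nat) u t ^ 2) / 4) v
     ((2 * pu (psi 3%nat) u v * pv (pu (psi 3%nat)) u v - 2 * pv (psi 3%nat) u v * pv (pv (psi 3%nat)) u v) / 4)).
  { apply (d_sqdiff (fun t => pu (psi 3%nat) u t) (fun t => pv (psi 3%nat) u t)).
    - exact (sm_dv U (pu (psi 3%nat)) u v (spu 3%nat H3) Huv).
    - exact (sm_dv U (pv (psi 3%nat)) u v (spv 3%nat H3) Huv). }
  eapply is_derive_eq.
  - apply (is_derive_plus (V:=R_NormedModule)).
    + apply d_lin4; [apply dW_v | apply dW_v]; auto using sXu, sXv.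
    + apply (G_mult eps K (fun t => N 3%nat u t) _ v (pv (N 3%nat) u v) _ Heps HK (sm_dv U (N 3%nat) u v (HsN 3%nat H3) Huv) Hdh).
      destruct Hor as [Ho | [Ho1 Ho2]]; [left; exact Ho| right]. cbv beta. rewrite Ho1, Ho2. split; [exact (eq_trans (f_equal (fun x => x / 4) (Rminus_diag (0^2))) (Rmult_0_l _)) | match goal with |- ?l = _ => assert (Z : l = 0 :> R) by (unfold Rdiv; ring); exact Z end].
  - simpl. unfold plus; simpl. unfold Xu, Xv.
    rewrite (wf_sym _ _ (fun i => pu (psi i) u v) (fun i => pv (pu (psi i)) u v)).
    rewrite (wf_sym _ _ (fun i => pv (psi i) u v) (fun i => pv (pv (psi i)) u v)).
    unfold Dvv, Du, Duv, Dv. lra.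
Qed.

Lemma dqi_u : Derive (fun s => snd (Qf eps K psi N s v)) u =
  - (wf eps 1 (Duu psi u v) (Dv psi u v) + wf eps 1 (Du psi u v) (Duv psi u v)) / 2
  + (Derive (gfun eps K) (N 3%nat u v) * pu (N 3%nat) u v * (- (pu (psi 3%nat) u v * pv (psi 3%nat) u v) / 2)
     + gfun eps K (N 3%nat u v) * (- (pu (pu (psi 3%nat)) u v * pv (psi 3%nat) u v + pu (psi 3%nat) u v * pv (pu (psi 3%nat)) u v) / 2)).
Proof.
  rewrite (Derive_ext _ _ u (fun s => Qf_snd s v)).
  apply is_derive_unique.
  assert (H3 : (3 < 4)%nat) by lia.
  assert (Hdh : is_derive (fun s => - (pu (psi 3%nat) s v * pv (psi 3%nat) s v) / 2) u
     (- (pu (pu (psi 3%nat)) u v * pv (psi 3%nat) u v + pu (psi 3%nat) u v * pv (pu (psi 3%nat)) u v) / 2)).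
  { rewrite <- (sm_schwarz U (psi 3%nat) u v HU (Hsp 3%nat H3) Huv).
    apply (d_prodh (fun s => pu (psi 3%nat) s v) (fun s => pv (psi 3%nat) s v)).
    - exact (sm_du U (pu (psi 3%nat)) u v (spu 3%nat H3) Huv).
    - exact (sm_du U (pv (psi 3%nat)) u v (spv 3%nat H3) Huv). }
  eapply is_derive_eq.
  - apply (is_derive_plus (V:=R_NormedModule)).
    + apply d_neg2. apply dW_u; auto using sXu, sXv.
    + apply (G_mult eps K (fun s => N 3%nat s v) _ u (pu (N 3%nat) u v) _ Heps HK (sm_du U (N 3%nat) u v (HsN 3%nat H3) Huv) Hdh).
      destruct Hor as [Ho | [Ho1 Ho2]]; [left; exact Ho| right]. cbv beta. rewrite Ho1, Ho2. split; match goal with |- ?l = _ => assert (Z : l = 0 :> R) by (unfold Rdiv; ring); exact Z end.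
  - simpl. unfold plus; simpl. unfold Xu, Xv. rewrite puXv.
    unfold Duu, Du, Duv, Dv. lra.
Qed.

Lemma dqi_v : Derive (fun t => snd (Qf eps K psi N u t)) v =
  - (wf eps 1 (Duv psi u v) (Dv psi u v) + wf eps 1 (Du psi u v) (Dvv psi u v)) / 2
  + (Derive (gfun eps K) (N 3%nat u v) * pv (N 3%nat) u v * (- (pu (psi 3%nat) u v * pv (psi 3%nat) u v) / 2)
     + gfun eps K (N 3%nat u v) * (- (pv (pu (psi 3%nat)) u v * pv (psi 3%nat) u v + pu (psi 3%nat) u v * pv (pv (psi 3%nat)) u v) / 2)).
Proof.
  rewrite (Derive_ext _ _ v (fun t => Qf_snd u t)).
  apply is_derive_unique.
  assert (H3 : (3 < 4)%nat) by lia.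
  assert (Hdh : is_derive (fun t => - (pu (psi 3%nat) u t * pv (psi 3%nat) u t) / 2) v
     (- (pv (pu (psi 3%nat)) u v * pv (psi 3%nat) u v + pu (psi 3%nat) u v * pv (pv (psi 3%nat)) u v) / 2)).
  { apply (d_prodh (fun t => pu (psi 3%nat) u t) (fun t => pv (psi 3%nat) u t)).
    - exact (sm_dv U (pu (psi 3%nat)) u v (spu 3%nat H3) Huv).
    - exact (sm_dv U (pv (psi 3%nat)) u v (spv 3%nat H3) Huv). }
  eapply is_derive_eq.
  - apply (is_derive_plus (V:=R_NormedModule)).
    + apply d_neg2. apply dW_v; auto using sXu, sXv.
    + apply (G_mult eps K (fun t => N 3%nat u t) _ v (pv (N 3%nat) u v) _ Heps HK (sm_dv U (N 3%nat) u v (HsN 3%nat H3) Huv) Hdh).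
      destruct Hor as [Ho | [Ho1 Ho2]]; [left; exact Ho| right]. cbv beta. rewrite Ho1, Ho2. split; match goal with |- ?l = _ => assert (Z : l = 0 :> R) by (unfold Rdiv; ring); exact Z end.
  - simpl. unfold plus; simpl. unfold Xu, Xv.
    unfold Dvv, Du, Duv, Dv. lra.
Qed.

End Pt.

Lemma main_pt u v (Huv : U (u, v)) :
  Cmod (Qzbar eps K psi N u v) ^ 2 <=
    K * (Derive (gfun eps K) (nuf N u v)) ^ 2 * (1 - nuf N u v ^ 2) ^ 2
      * Cmod (hz psi u v) ^ 2 / (4 * chifun eps K (nuf N u v))
      * Cmod (Qf eps K psi N u v) ^ 2.
Proof.
  destruct (pt_facts u v Huv) as [HD [HL [HK' _]]].
  pose proof (iRT u v Huv) as Rt.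
  assert (Hor : 1 - N 3%nat u v ^ 2 <> 0 \/ (pu (psi 3%nat) u v = 0 /\ pv (psi 3%nat) u v = 0)).
  { destruct (Req_dec (1 - N 3%nat u v ^ 2) 0) as [Z|Z]; [right|left; exact Z].
    unfold snu in Rt. rewrite Z in Rt. unfold sD in HD. fold (shu u v). fold (shv u v).
    set (x := shu u v) in *. set (y := shv u v) in *.
    set (p := sI11 u v) in *. set (q := sI12 u v) in *. set (r := sI22 u v) in *.
    assert (Hp : p <> 0) by (intro C; rewrite C in HD; nra).
    assert (E : p * (r*x^2 - 2*q*x*y + p*y^2) = (p*y - q*x)^2 + (p*r - q^2)*x^2) by ring.
    assert (Hx : x = 0).
    { assert (0 <= (p*y - q*x)^2) by apply pow2_ge_0. assert ((p*r - q^2)*x^2 = 0) by nra.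
      apply Rmult_integral in H0. destruct H0 as [H0|H0]; [lra|]. nra. }
    split; [exact Hx|]. rewrite Hx in Rt.
    assert (Hy2 : p*y^2 = 0) by nra.
    assert (Hpy : (p*y)*(p*y) = 0) by (replace ((p*y)*(p*y)) with (p*(p*y^2)) by ring; rewrite Hy2; ring).
    apply Rmult_integral in Hpy. destruct Hpy as [Hpy|Hpy]; apply Rmult_integral in Hpy; destruct Hpy; auto; contradiction. }
  unfold Qzbar, pu, pv. cbv beta.
  rewrite (dqr_u u v Huv Hor), (dqr_v u v Huv Hor), (dqi_u u v Huv Hor), (dqi_v u v Huv Hor).
  rewrite !Cmod_sq. rewrite (Qf_fst u v), (Qf_snd u v). unfold hz. cbn [fst snd].
  unfold nuf, hgt.
  rewrite (wf_sym _ _ (Du psi u v) (Duv psi u v)), (wf_sym _ _ (Du psi u v) (Dvv psi u v)).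
  change (W Xu Xu u v) with (sI11 u v). change (W Xv Xv u v) with (sI22 u v). change (W Xu Xv u v) with (sI12 u v).
  fold (sa1 u v) (sa2 u v) (sb1 u v) (sb2 u v) (sc1 u v) (sc2 u v).
  fold (snu u v) (shu u v) (shv u v).
  set (g := gfun eps K (snu u v)). set (gp := Derive (gfun eps K) (snu u v)). set (chi := chifun eps K (snu u v)).
  pose proof (g_ode eps K (snu u v) Heps HK) as Hode. cbv zeta in Hode. fold g gp in Hode.
  destruct (chi_facts eps K (snu u v) Heps HK) as [Hc1 Hc2]. fold chi g in Hc1, Hc2.
  pose proof (iCod u v Huv) as [Co1 Co2].
  assert (HD0 : sD u v <> 0) by lra. assert (HL0 : sL u v <> 0) by lra.
  pose proof (core_alg2 eps K (sL u v) (sI11 u v) (sI12 u v) (sI22 u v) (shu u v) (shv u v) (snu u v) g gp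
     (sa1 u v) (sa2 u v) (sb1 u v) (sb2 u v) (sc1 u v) (sc2 u v)
     (pu (pu (psi 3%nat)) u v) (pv (pu (psi 3%nat)) u v) (pv (pv (psi 3%nat)) u v) (pu (N 3%nat) u v) (pv (N 3%nat) u v)
     HD0 HL0 HK' Co1 Co2 (iA3 u v Huv) (iB3 u v Huv) (iC3 u v Huv) (im3 u v Huv) (ik3 u v Huv) Hode Rt) as CA.
  cbv zeta in CA. destruct CA as [CA1 CA2].
  match goal with |- ?A ^ 2 + ?B ^ 2 <= _ => set (re := A); set (im := B) end.
  match type of CA1 with _ = ?r => assert (Hre : re = r) by (rewrite <- CA1; unfold re; lra) end.
  match type of CA2 with _ = ?r => assert (Him : im = r) by (rewrite <- CA2; unfold im; lra) end.
  assert (HLK : sL u v ^ 2 = K * sD u v) by (rewrite HK'; field; lra).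
  pose proof (final_ineq K (sL u v) (sI11 u v) (sI12 u v) (sI22 u v) (shu u v) (shv u v) g gp chi (1 - snu u v ^ 2) re im
     HD HL HK HLK Hc2 Hc1 Rt Hre Him) as FI.
  cbv zeta in FI.
  eapply Rle_trans; [exact FI|]. right. field. lra.
Qed.

End Main.


Theorem lemma7p1 (eps K : R) (U : R * R -> Prop) (psi N : nat -> R -> R -> R)
  (Heps : eps = 1 \/ eps = -1) (HK : 0 < K)
  (Hchart : cec_chart eps K U psi N) (u v : R) (Huv : U (u, v)) :
  Cmod (Qzbar eps K psi N u v) ^ 2 <=
    K * (Derive (gfun eps K) (nuf N u v)) ^ 2 * (1 - nuf N u v ^ 2) ^ 2
      * Cmod (hz psi u v) ^ 2 / (4 * chifun eps K (nuf N u v))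
      * Cmod (Qf eps K psi N u v) ^ 2.
Proof.
  destruct Hchart as [HU [Hsm Hpt]].
  exact (main_pt eps K U psi N Heps HK HU (fun i Hi => proj1 (Hsm i Hi)) (fun i Hi => proj2 (Hsm i Hi)) Hpt u v Huv).
Qed.
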